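(* Let $X$ be compact Hausdorff, $\alpha:C(X)\to C(X)$ a unital *-monomorphism and $\varphi:X\to X$ the continuous surjection with $\alpha(a)=a\circ\varphi$. Then $\alpha$ is of finite type if and only if $\varphi$ is a local homeomorphism. Moreover, a transfer operator $L:C(X)\to C(X)$ for $\alpha$ is of finite type if and only if $L(a)(y)=\sum_{x\in\varphi^{-1}(y)}\varrho(x)a(x)$ for a continuous $\varrho:X\to(0,1]$ (strictly positive) with $\sum_{x\in\varphi^{-1}(y)}\varrho(x)=1$ for all $y$, in which case $\varphi$ is a local homeomorphism and a quasi-basis for $L$ is given by $u_i=\sqrt{v_i/\varrho}$, $i=1,\dots,n$, where $\{v_i\}_{i=1}^n\subseteq C(X)$ is any partition of unity subordinate to an open cover $\{U_i\}_{i=1}^n$ of $X$ such that each $\varphi|_{U_i}:U_i\to\varphi(U_i)$ is a homeomorphism.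
   Context: A (unital) transfer operator for $\alpha$ is a positive linear map $L:C(X)\to C(X)$ with $L(1)=1$ and $L(\alpha(a)b)=aL(b)$ for all $a,b$. $L$ is of finite type if there exist $u_1,\dots,u_N\in C(X)$ (a quasi-basis) with $a=\sum_{i=1}^Nu_i\alpha(L(u_i^*a))$ for all $a\in C(X)$. $\alpha$ is of finite type if it admits a transfer operator of finite type. *)

(* Defs.v *)
From Stdlib Require Import Reals List.
Open Scope R_scope.

Definition Cplx : Type := (R * R)%type.
Definition Cadd (z w : Cplx) : Cplx := (fst z + fst w, snd z + snd w).
Definition Copp (z : Cplx) : Cplx := (- fst z, - snd z).
Definition Cmul (z w : Cplx) : Cplx :=
  (fst z * fst w - snd z * snd w, fst z * snd w + snd z * fst w).
Definition Cconj (z : Cplx) : Cplx := (fst z, - snd z).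
Definition RtoC (r : R) : Cplx := (r, 0).
Definition C0 : Cplx := RtoC 0.
Definition C1 : Cplx := RtoC 1.
Definition Cmod (z : Cplx) : R := sqrt (fst z * fst z + snd z * snd z).
(** z >= 0 in the C*-algebra C *)
Definition Cnonneg (z : Cplx) : Prop := snd z = 0 /\ 0 <= fst z.

Fixpoint Csum (n : nat) (f : nat -> Cplx) : Cplx :=
  match n with O => C0 | S m => Cadd (Csum m f) (f m) end.
Fixpoint Rsum (n : nat) (f : nat -> R) : R :=
  match n with O => 0 | S m => Rsum m f + f m end.
Fixpoint Csum_list {X : Type} (l : list X) (f : X -> Cplx) : Cplx :=
  match l with nil => C0 | x :: l' => Cadd (f x) (Csum_list l' f) end.
Fixpoint Rsum_list {X : Type} (l : list X) (f : X -> R) : R :=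
  match l with nil => 0 | x :: l' => f x + Rsum_list l' f end.

Record TopSpace : Type := {
  pt :> Type;
  is_open : (pt -> Prop) -> Prop;
  open_full : is_open (fun _ => True);
  open_inter : forall U V, is_open U -> is_open V -> is_open (fun x => U x /\ V x);
  open_union : forall F : (pt -> Prop) -> Prop,
      (forall U, F U -> is_open U) -> is_open (fun x => exists U, F U /\ U x)
}.
Arguments is_open {t} _.

Definition compact_space (X : TopSpace) : Prop :=
  forall F : (X -> Prop) -> Prop,
    (forall U, F U -> is_open U) -> (forall x, exists U, F U /\ U x) ->
    exists l : list (X -> Prop), (forall U, In U l -> F U) /\
                                 (forall x, exists U, In U l /\ U x).

Definition hausdorff (X : TopSpace) : Prop :=
  forall x y : X, x <> y -> exists U V, is_open U /\ is_open V /\ U x /\ V y /\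
                            (forall z, ~ (U z /\ V z)).

Definition top_continuous {X Y : TopSpace} (f : X -> Y) : Prop :=
  forall V, is_open V -> is_open (fun x => V (f x)).

Definition contC {X : TopSpace} (f : X -> Cplx) : Prop :=
  forall x eps, 0 < eps -> exists U, is_open U /\ U x /\
    forall y, U y -> Cmod (Cadd (f y) (Copp (f x))) < eps.
Definition contR {X : TopSpace} (f : X -> R) : Prop :=
  forall x eps, 0 < eps -> exists U, is_open U /\ U x /\
    forall y, U y -> Rabs (f y - f x) < eps.

Definition img {X Y : Type} (f : X -> Y) (V : X -> Prop) : Y -> Prop :=
  fun y => exists x, V x /\ f x = y.

Definition top_closure {X : TopSpace} (S : X -> Prop) : X -> Prop :=
  fun x => forall U, is_open U -> U x -> exists z, U z /\ S z.

(** f restricted to U is a homeomorphism onto f(U) (subspace topologies);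
   continuity of f is assumed globally. *)
Definition homeo_onto_image {X : TopSpace} (f : X -> X) (U : X -> Prop) : Prop :=
  (forall x y, U x -> U y -> f x = f y -> x = y) /\
  (forall V, is_open V -> exists W, is_open W /\
     forall y, img f (fun x => U x /\ V x) y <-> (W y /\ img f U y)).

Definition local_homeo {X : TopSpace} (f : X -> X) : Prop :=
  top_continuous f /\
  forall x, exists U, is_open U /\ U x /\ is_open (img f U) /\ homeo_onto_image f U.

(** * Operators on C(X), represented as maps on X -> C, only their behaviour
   on top_continuous functions being relevant. *)
Section Ops.
Context {X : TopSpace}.

Definition alpha_of (phi : X -> X) (a : X -> Cplx) : X -> Cplx := fun x => a (phi x).

Definition is_transfer_operator (phi : X -> X) (L : (X -> Cplx) -> (X -> Cplx)) : Prop :=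
  (forall a, contC a -> contC (L a)) /\
  (forall a b, contC a -> contC b -> forall y,
      L (fun x => Cadd (a x) (b x)) y = Cadd (L a y) (L b y)) /\
  (forall (c : Cplx) a, contC a -> forall y,
      L (fun x => Cmul c (a x)) y = Cmul c (L a y)) /\
  (forall a, contC a -> (forall x, Cnonneg (a x)) -> forall y, Cnonneg (L a y)) /\
  (forall y, L (fun _ => C1) y = C1) /\
  (forall a b, contC a -> contC b -> forall y,
      L (fun x => Cmul (alpha_of phi a x) (b x)) y = Cmul (a y) (L b y)).

Definition is_quasi_basis (phi : X -> X) (L : (X -> Cplx) -> (X -> Cplx))
    (N : nat) (u : nat -> X -> Cplx) : Prop :=
  (forall i, (i < N)%nat -> contC (u i)) /\
  forall a, contC a -> forall x,
    a x = Csum N (fun i => Cmul (u i x)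
                  (alpha_of phi (L (fun z => Cmul (Cconj (u i z)) (a z))) x)).

Definition transfer_finite_type (phi : X -> X) (L : (X -> Cplx) -> (X -> Cplx)) : Prop :=
  exists N u, is_quasi_basis phi L N u.

Definition alpha_finite_type (phi : X -> X) : Prop :=
  exists L, is_transfer_operator phi L /\ transfer_finite_type phi L.

Definition fibre_rep (phi : X -> X) (L : (X -> Cplx) -> (X -> Cplx)) (rho : X -> R) : Prop :=
  contR rho /\ (forall x, 0 < rho x <= 1) /\
  forall y, exists l : list X, NoDup l /\ (forall x, In x l <-> phi x = y) /\
    Rsum_list l rho = 1 /\
    forall a, contC a -> L a y = Csum_list l (fun x => Cmul (RtoC (rho x)) (a x)).

Definition partition_of_unity_subordinate (n : nat) (U : nat -> X -> Prop)
    (v : nat -> X -> R) : Prop :=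
  (forall i, (i < n)%nat -> contR (v i) /\ (forall x, 0 <= v i x <= 1) /\
      (forall x, top_closure (fun z => v i z <> 0) x -> U i x)) /\
  (forall x, Rsum n (fun i => v i x) = 1).

Definition open_cover_homeo (phi : X -> X) (n : nat) (U : nat -> X -> Prop) : Prop :=
  (forall i, (i < n)%nat -> is_open (U i) /\ homeo_onto_image phi (U i)) /\
  (forall x, exists i, (i < n)%nat /\ U i x).

End Ops.

(* Main.v *)
Require Import Defs.
From Stdlib Require Import Reals List Lra Lia Psatz FunctionalExtensionality PropExtensionality ClassicalEpsilon Classical Arith ZArith.
Open Scope R_scope.

Lemma pair_eq (z w : Cplx) : fst z = fst w -> snd z = snd w -> z = w.
Proof. destruct z, w; simpl; intros; subst; reflexivity. Qed.

Ltac Csimpl := unfold Cadd, Copp, Cmul, Cconj, RtoC, Defs.C0, Defs.C1 in *; simpl in *.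
Ltac Cring := apply pair_eq; Csimpl; ring.

Lemma fst_Csum n f : fst (Csum n f) = Rsum n (fun i => fst (f i)).
Proof. induction n; simpl; auto. rewrite IHn; reflexivity. Qed.
Lemma snd_Csum n f : snd (Csum n f) = Rsum n (fun i => snd (f i)).
Proof. induction n; simpl; auto. rewrite IHn; reflexivity. Qed.
Lemma fst_Csum_list {T} (l : list T) f : fst (Csum_list l f) = Rsum_list l (fun i => fst (f i)).
Proof. induction l; simpl; auto. rewrite IHl; reflexivity. Qed.
Lemma snd_Csum_list {T} (l : list T) f : snd (Csum_list l f) = Rsum_list l (fun i => snd (f i)).
Proof. induction l; simpl; auto. rewrite IHl; reflexivity. Qed.

Lemma Rsum_ext n f g : (forall i, (i < n)%nat -> f i = g i) -> Rsum n f = Rsum n g.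
Proof. induction n; simpl; intros; auto. rewrite IHn, H; auto. Qed.
Lemma Rsum_list_ext {T} (l : list T) f g : (forall i, In i l -> f i = g i) -> Rsum_list l f = Rsum_list l g.
Proof. induction l; simpl; intros; auto. rewrite IHl, H; auto. Qed.
Lemma Rsum_plus n f g : Rsum n (fun i => f i + g i) = Rsum n f + Rsum n g.
Proof. induction n; simpl; auto. lra. rewrite IHn; ring. Qed.
Lemma Rsum_scal n c f : Rsum n (fun i => c * f i) = c * Rsum n f.
Proof. induction n; simpl; auto. ring. rewrite IHn; ring. Qed.
Lemma Rsum_list_plus {T} (l : list T) f g : Rsum_list l (fun i => f i + g i) = Rsum_list l f + Rsum_list l g.
Proof. induction l; simpl; auto. lra. rewrite IHl; ring. Qed.
Lemma Rsum_list_scal {T} (l : list T) c f : Rsum_list l (fun i => c * f i) = c * Rsum_list l f.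
Proof. induction l; simpl; auto. ring. rewrite IHl; ring. Qed.
Lemma Rsum_0 n : Rsum n (fun _ => 0) = 0.
Proof. induction n; simpl; auto. rewrite IHn; ring. Qed.
Lemma Rsum_list_0 {T} (l : list T) : Rsum_list l (fun _ => 0) = 0.
Proof. induction l; simpl; auto. rewrite IHl; ring. Qed.
Lemma Rsum_nonneg n f : (forall i, (i < n)%nat -> 0 <= f i) -> 0 <= Rsum n f.
Proof. induction n; simpl; intros; try lra. assert (0 <= f n) by auto. assert (0 <= Rsum n f) by auto. lra. Qed.
Lemma Rsum_le n f g : (forall i, (i < n)%nat -> f i <= g i) -> Rsum n f <= Rsum n g.
Proof. induction n; simpl; intros; try lra. assert (f n <= g n) by auto. assert (Rsum n f <= Rsum n g) by auto. lra. Qed.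
Lemma Rsum_list_nonneg {T} (l : list T) f : (forall i, In i l -> 0 <= f i) -> 0 <= Rsum_list l f.
Proof. induction l; simpl; intros; try lra. assert (0 <= f a) by auto. assert (0 <= Rsum_list l f) by auto. lra. Qed.
Lemma Rsum_list_le {T} (l : list T) f g : (forall i, In i l -> f i <= g i) -> Rsum_list l f <= Rsum_list l g.
Proof. induction l; simpl; intros; try lra. assert (f a <= g a) by auto. assert (Rsum_list l f <= Rsum_list l g) by auto. lra. Qed.
Lemma Rsum_list_ge_elem {T} (l : list T) f x : (forall i, In i l -> 0 <= f i) -> In x l -> f x <= Rsum_list l f.
Proof. induction l; simpl; intros H Hin; [contradiction|]. destruct Hin as [<-|Hin].
 - assert (0 <= Rsum_list l f) by (apply Rsum_list_nonneg; auto). lra.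
 - assert (f x <= Rsum_list l f) by auto. assert (0 <= f a) by auto. lra. Qed.
Lemma Rsum_list_ge_two {T} (l : list T) f x y : NoDup l -> (forall i, In i l -> 0 <= f i) -> In x l -> In y l -> x <> y -> f x + f y <= Rsum_list l f.
Proof. induction l; simpl; intros Hnd H Hx Hy Hxy; [contradiction|]. inversion Hnd; subst.
 destruct Hx as [<-|Hx]; destruct Hy as [<-|Hy].
 - congruence.
 - assert (f y <= Rsum_list l f) by (apply Rsum_list_ge_elem; auto). lra.
 - assert (f x <= Rsum_list l f) by (apply Rsum_list_ge_elem; auto). lra.
 - assert (f x + f y <= Rsum_list l f) by auto. assert (0 <= f a) by auto. lra. Qed.
Lemma Rsum_list_single {T} (l : list T) f x : NoDup l -> In x l -> (forall z, In z l -> z <> x -> f z = 0) -> Rsum_list l f = f x.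
Proof. induction l; simpl; intros Hnd Hin H; [contradiction|]. inversion Hnd; subst.
 destruct Hin as [<-|Hin].
 - rewrite (Rsum_list_ext l f (fun _ => 0)), Rsum_list_0. ring.
   intros i Hi. apply H; auto. intro; subst; contradiction.
 - rewrite IHl; auto. rewrite H; auto. ring. intro; subst; contradiction. Qed.
Lemma Rsum_list_notin {T} (l : list T) f : (forall z, In z l -> f z = 0) -> Rsum_list l f = 0.
Proof. intros. rewrite (Rsum_list_ext l f (fun _ => 0)); auto. apply Rsum_list_0. Qed.
Lemma Csum_list_single {T} (l : list T) f x : NoDup l -> In x l -> (forall z, In z l -> z <> x -> f z = C0) -> Csum_list l f = f x.
Proof. intros. apply pair_eq. rewrite fst_Csum_list. apply (Rsum_list_single l (fun i => fst (f i))); auto.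
 intros; rewrite H1; auto. rewrite snd_Csum_list. apply (Rsum_list_single l (fun i => snd (f i))); auto.
 intros; rewrite H1; auto. Qed.
Lemma Rsum_list_le1 {T} (l : list T) f : NoDup l -> (forall i, In i l -> 0 <= f i <= 1) ->
  (forall x y, In x l -> In y l -> f x <> 0 -> f y <> 0 -> x = y) -> Rsum_list l f <= 1.
Proof. induction l; simpl; intros Hnd H Hu; [lra|]. inversion Hnd; subst.
 destruct (Req_dec (f a) 0) as [E|E].
 - rewrite E. assert (Rsum_list l f <= 1) by (apply IHl; auto). lra.
 - rewrite Rsum_list_notin. assert (f a <= 1) by (apply H; auto). lra.
   intros z Hz. destruct (Req_dec (f z) 0); auto. exfalso. assert (a = z) by (apply Hu; auto). subst; contradiction. Qed.

Lemma is_open_ext {X : TopSpace} (U V : X -> Prop) : (forall x, U x <-> V x) -> is_open U -> is_open V.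
Proof. intros H HU. replace V with U; auto. apply functional_extensionality; intro x. apply propositional_extensionality; auto. Qed.

Lemma open_empty {X : TopSpace} : is_open (fun _ : X => False).
Proof. apply (is_open_ext (fun x => exists U, (fun _ : X -> Prop => False) U /\ U x)).
 - intros x; split; [intros [U [[] _]] | contradiction].
 - apply open_union; contradiction. Qed.

Lemma contR_const {X : TopSpace} (c : R) : contR (fun _ : X => c).
Proof. intros x eps He. exists (fun _ => True); split; [apply open_full|split; auto].
 intros; rewrite Rminus_diag, Rabs_R0; auto. Qed.

Lemma contR_comp1 {X : TopSpace} (f : X -> R) (h : R -> R) : contR f ->
  (forall x, forall eps, 0 < eps -> exists d, 0 < d /\ forall a, Rabs (a - f x) < d -> Rabs (h a - h (f x)) < eps) ->
  contR (fun x => h (f x)).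
Proof. intros Hf Hh x eps He. destruct (Hh x eps He) as [d [Hd Hd']].
 destruct (Hf x d Hd) as [U [HU [HUx HUy]]]. exists U; repeat split; auto. Qed.

Lemma contR_comp2 {X : TopSpace} (f g : X -> R) (h : R -> R -> R) : contR f -> contR g ->
  (forall x, forall eps, 0 < eps -> exists d, 0 < d /\ forall a b, Rabs (a - f x) < d -> Rabs (b - g x) < d -> Rabs (h a b - h (f x) (g x)) < eps) ->
  contR (fun x => h (f x) (g x)).
Proof. intros Hf Hg Hh x eps He. destruct (Hh x eps He) as [d [Hd Hd']].
 destruct (Hf x d Hd) as [U [HU [HUx HUy]]]. destruct (Hg x d Hd) as [V [HV [HVx HVy]]].
 exists (fun z => U z /\ V z); repeat split; auto. apply open_inter; auto. intros y [? ?]; auto. Qed.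

Lemma cont_pt_ok (h : R -> R) (a : R) : continuity_pt h a ->
  forall eps, 0 < eps -> exists d, 0 < d /\ forall b, Rabs (b - a) < d -> Rabs (h b - h a) < eps.
Proof. intros H eps He. destruct (H eps He) as [d [Hd H']]. exists d; split; auto.
 intros b Hb. destruct (Req_dec b a) as [->|Hne]. rewrite Rminus_diag, Rabs_R0; auto.
 apply H'. split. split; [exact I| auto]. exact Hb. Qed.

Lemma contR_plus {X : TopSpace} (f g : X -> R) : contR f -> contR g -> contR (fun x => f x + g x).
Proof. intros; apply (contR_comp2 f g Rplus); auto. intros x eps He. exists (eps/2); split; [lra|].
 intros a b Ha Hb. replace (a + b - (f x + g x)) with ((a - f x) + (b - g x)) by ring.
 eapply Rle_lt_trans; [apply Rabs_triang| lra]. Qed.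

Lemma contR_opp {X : TopSpace} (f : X -> R) : contR f -> contR (fun x => - f x).
Proof. intros; apply (contR_comp1 f Ropp); auto. intros x eps He. exists eps; split; auto.
 intros a Ha. replace (- a - - f x) with (- (a - f x)) by ring. rewrite Rabs_Ropp; auto. Qed.

Lemma contR_minus {X : TopSpace} (f g : X -> R) : contR f -> contR g -> contR (fun x => f x - g x).
Proof. intros. apply (contR_plus f (fun x => - g x)); auto. apply contR_opp; auto. Qed.

Lemma mult_cont_aux (a0 b0 eps : R) : 0 < eps -> exists d, 0 < d /\ forall a b, Rabs (a - a0) < d -> Rabs (b - b0) < d -> Rabs (a * b - a0 * b0) < eps.
Proof. intros He. set (K := Rabs a0 + Rabs b0 + 1).
 assert (HK : 0 < K) by (unfold K; pose proof (Rabs_pos a0); pose proof (Rabs_pos b0); lra).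
 exists (Rmin 1 (eps / K)). split. apply Rmin_glb_lt; [lra| apply Rdiv_lt_0_compat; lra].
 intros a b Ha Hb. pose proof (Rmin_l 1 (eps/K)). pose proof (Rmin_r 1 (eps/K)).
 set (d := Rmin 1 (eps / K)) in *.
 replace (a * b - a0 * b0) with ((a - a0) * (b - b0) + (a - a0) * b0 + a0 * (b - b0)) by ring.
 assert (Rabs ((a - a0) * (b - b0)) <= d * d) by (rewrite Rabs_mult; apply Rmult_le_compat; try apply Rabs_pos; lra).
 assert (Rabs ((a - a0) * b0) <= d * Rabs b0) by (rewrite Rabs_mult; apply Rmult_le_compat_r; try apply Rabs_pos; lra).
 assert (Rabs (a0 * (b - b0)) <= Rabs a0 * d) by (rewrite Rabs_mult; apply Rmult_le_compat_l; try apply Rabs_pos; lra).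
 assert (d * K <= eps) by (apply Rle_trans with (eps / K * K); [apply Rmult_le_compat_r; lra | right; field; lra]).
 assert (0 < d) by (apply Rmin_glb_lt; [lra| apply Rdiv_lt_0_compat; lra]).
 eapply Rle_lt_trans. apply Rabs_triang. eapply Rle_lt_trans. apply Rplus_le_compat_r. apply Rabs_triang.
 assert (Rabs ((a - a0) * (b - b0)) < d * 1).
 { rewrite Rabs_mult. apply Rle_lt_trans with (Rabs (a - a0) * 1). apply Rmult_le_compat_l. apply Rabs_pos. lra.
   apply Rmult_lt_compat_r; lra. }
 unfold K in *; nra. Qed.

Lemma contR_mult {X : TopSpace} (f g : X -> R) : contR f -> contR g -> contR (fun x => f x * g x).
Proof. intros; apply (contR_comp2 f g Rmult); auto. intros x eps He. apply mult_cont_aux; auto. Qed.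

Lemma contR_scal {X : TopSpace} (c : R) (f : X -> R) : contR f -> contR (fun x => c * f x).
Proof. intros. apply (contR_mult (fun _ => c) f); auto. apply contR_const. Qed.

Lemma contR_inv {X : TopSpace} (f : X -> R) : contR f -> (forall x, f x <> 0) -> contR (fun x => / f x).
Proof. intros Hf Hn. apply (contR_comp1 f Rinv); auto. intros x eps He.
 pose proof (continuity_pt_inv id (f x) (derivable_continuous_pt _ _ (derivable_pt_id _)) (Hn x)).
 destruct (cont_pt_ok _ _ H eps He) as [d [Hd H']]. exists d; split; auto. Qed.

Lemma contR_sqrt {X : TopSpace} (f : X -> R) : contR f -> (forall x, 0 <= f x) -> contR (fun x => sqrt (f x)).
Proof. intros Hf Hn. apply (contR_comp1 f sqrt); auto. intros x eps He.
 destruct (cont_pt_ok _ _ (continuity_pt_sqrt _ (Hn x)) eps He) as [d [Hd H']]. exists d; split; auto. Qed.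

Lemma contR_lip {X : TopSpace} (f : X -> R) (h : R -> R) : contR f -> (forall a b, Rabs (h a - h b) <= Rabs (a - b)) -> contR (fun x => h (f x)).
Proof. intros Hf Hh. apply (contR_comp1 f h); auto. intros x eps He. exists eps; split; auto.
 intros a Ha. eapply Rle_lt_trans; eauto. Qed.

Lemma contR_min1 {X : TopSpace} (f : X -> R) (c : R) : contR f -> contR (fun x => Rmin (f x) c).
Proof. intros Hf. apply (contR_lip f (fun a => Rmin a c)); auto. intros a b.
 unfold Rmin; destruct (Rle_dec a c), (Rle_dec b c); unfold Rabs; repeat match goal with |- context [Rcase_abs ?x] => destruct (Rcase_abs x) end; lra. Qed.

Lemma contR_max0 {X : TopSpace} (f : X -> R) : contR f -> contR (fun x => Rmax (f x) 0).
Proof. intros Hf. apply (contR_lip f (fun a => Rmax a 0)); auto. intros a b.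
 unfold Rmax; destruct (Rle_dec a 0), (Rle_dec b 0); unfold Rabs; repeat match goal with |- context [Rcase_abs ?x] => destruct (Rcase_abs x) end; lra. Qed.

Lemma contR_div {X : TopSpace} (f g : X -> R) : contR f -> contR g -> (forall x, g x <> 0) -> contR (fun x => f x / g x).
Proof. intros. unfold Rdiv. apply (contR_mult f (fun x => / g x)); auto. apply contR_inv; auto. Qed.

Lemma contR_Rsum {X : TopSpace} (n : nat) (f : nat -> X -> R) : (forall i, (i < n)%nat -> contR (f i)) -> contR (fun x => Rsum n (fun i => f i x)).
Proof. induction n; simpl; intros. apply contR_const. apply (contR_plus (fun x => Rsum n (fun i => f i x)) (f n)); auto. Qed.

Lemma contR_ext {X : TopSpace} (f g : X -> R) : (forall x, f x = g x) -> contR f -> contR g.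
Proof. intros H Hf x eps He. destruct (Hf x eps He) as [U [? [? ?]]]. exists U; repeat split; auto.
 intros; rewrite <- !H; auto. Qed.
Lemma contC_ext {X : TopSpace} (f g : X -> Cplx) : (forall x, f x = g x) -> contC f -> contC g.
Proof. intros H Hf x eps He. destruct (Hf x eps He) as [U [? [? ?]]]. exists U; repeat split; auto.
 intros; rewrite <- !H; auto. Qed.

Lemma contR_comp_phi {X : TopSpace} (phi : X -> X) (f : X -> R) : top_continuous phi -> contR f -> contR (fun x => f (phi x)).
Proof. intros Hp Hf x eps He. destruct (Hf (phi x) eps He) as [U [HU [HUx HUy]]].
 exists (fun z => U (phi z)); repeat split; auto. Qed.
Lemma contC_comp_phi {X : TopSpace} (phi : X -> X) (f : X -> Cplx) : top_continuous phi -> contC f -> contC (fun x => f (phi x)).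
Proof. intros Hp Hf x eps He. destruct (Hf (phi x) eps He) as [U [HU [HUx HUy]]].
 exists (fun z => U (phi z)); repeat split; auto. Qed.

Lemma Cmod_ge_fst z : Rabs (fst z) <= Cmod z.
Proof. unfold Cmod. rewrite <- sqrt_Rsqr_abs. apply sqrt_le_1_alt. unfold Rsqr. nra. Qed.
Lemma Cmod_ge_snd z : Rabs (snd z) <= Cmod z.
Proof. unfold Cmod. rewrite <- sqrt_Rsqr_abs. apply sqrt_le_1_alt. unfold Rsqr. nra. Qed.
Lemma Cmod_le z : Cmod z <= Rabs (fst z) + Rabs (snd z).
Proof. unfold Cmod. pose proof (Rabs_pos (fst z)). pose proof (Rabs_pos (snd z)).
 rewrite <- (sqrt_Rsqr (Rabs (fst z) + Rabs (snd z))) by lra. apply sqrt_le_1_alt. unfold Rsqr.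
 assert (fst z * fst z = Rabs (fst z) * Rabs (fst z)) by (rewrite <- Rabs_mult; rewrite Rabs_pos_eq; nra).
 assert (snd z * snd z = Rabs (snd z) * Rabs (snd z)) by (rewrite <- Rabs_mult; rewrite Rabs_pos_eq; nra). nra. Qed.

Lemma contC_fst {X : TopSpace} (f : X -> Cplx) : contC f -> contR (fun x => fst (f x)).
Proof. intros Hf x eps He. destruct (Hf x eps He) as [U [? [? H']]]. exists U; repeat split; auto.
 intros y Hy. eapply Rle_lt_trans; [|apply (H' y Hy)]. pose proof (Cmod_ge_fst (Cadd (f y) (Copp (f x)))). Csimpl. exact H1. Qed.
Lemma contC_snd {X : TopSpace} (f : X -> Cplx) : contC f -> contR (fun x => snd (f x)).
Proof. intros Hf x eps He. destruct (Hf x eps He) as [U [? [? H']]]. exists U; repeat split; auto.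
 intros y Hy. eapply Rle_lt_trans; [|apply (H' y Hy)]. pose proof (Cmod_ge_snd (Cadd (f y) (Copp (f x)))). Csimpl. exact H1. Qed.
Lemma contC_pair {X : TopSpace} (f g : X -> R) : contR f -> contR g -> contC (fun x => (f x, g x)).
Proof. intros Hf Hg x eps He. destruct (Hf x (eps/2)) as [U [? [? HU]]]; [lra|].
 destruct (Hg x (eps/2)) as [V [? [? HV]]]; [lra|].
 exists (fun z => U z /\ V z); repeat split; auto. apply open_inter; auto.
 intros y [Hu Hv]. eapply Rle_lt_trans. apply Cmod_le. Csimpl. specialize (HU y Hu). specialize (HV y Hv).
 replace (f y + - f x) with (f y - f x) by ring. replace (g y + - g x) with (g y - g x) by ring. lra. Qed.
Lemma contC_split {X : TopSpace} (f : X -> Cplx) : contR (fun x => fst (f x)) -> contR (fun x => snd (f x)) -> contC f.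
Proof. intros. apply (contC_ext (fun x => (fst (f x), snd (f x)))). intros; destruct (f x); auto. apply contC_pair; auto. Qed.

Lemma contC_RtoC {X : TopSpace} (f : X -> R) : contR f -> contC (fun x => RtoC (f x)).
Proof. intros. apply contC_pair; auto. apply contR_const. Qed.
Lemma contC_const {X : TopSpace} (c : Cplx) : contC (fun _ : X => c).
Proof. apply contC_split; apply contR_const. Qed.
Lemma contC_add {X : TopSpace} (f g : X -> Cplx) : contC f -> contC g -> contC (fun x => Cadd (f x) (g x)).
Proof. intros. apply contC_split; simpl; apply contR_plus; first [apply contC_fst | apply contC_snd]; auto. Qed.
Lemma contC_mul {X : TopSpace} (f g : X -> Cplx) : contC f -> contC g -> contC (fun x => Cmul (f x) (g x)).
Proof. intros. apply contC_split; simpl. 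
 - apply contR_minus; apply contR_mult; first [apply contC_fst | apply contC_snd]; auto.
 - apply contR_plus; apply contR_mult; first [apply contC_fst | apply contC_snd]; auto. Qed.
Lemma contC_conj {X : TopSpace} (f : X -> Cplx) : contC f -> contC (fun x => Cconj (f x)).
Proof. intros. apply contC_split; simpl. apply contC_fst; auto. apply contR_opp, contC_snd; auto. Qed.
Lemma contC_opp {X : TopSpace} (f : X -> Cplx) : contC f -> contC (fun x => Copp (f x)).
Proof. intros. apply contC_split; simpl; apply contR_opp; first [apply contC_fst | apply contC_snd]; auto. Qed.
Lemma contC_Csum {X : TopSpace} (n : nat) (f : nat -> X -> Cplx) : (forall i, (i < n)%nat -> contC (f i)) -> contC (fun x => Csum n (fun i => f i x)).
Proof. induction n; simpl; intros. apply contC_const. apply (contC_add (fun x => Csum n (fun i => f i x)) (f n)); auto. Qed.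
Lemma contC_Csum_list {X : TopSpace} {T} (l : list T) (f : T -> X -> Cplx) : (forall i, In i l -> contC (f i)) -> contC (fun x => Csum_list l (fun i => f i x)).
Proof. induction l; simpl; intros. apply contC_const. apply (contC_add (f a) (fun x => Csum_list l (fun i => f i x))); auto. Qed.

Lemma choice_fun {A B : Type} (P : A -> B -> Prop) : (forall a, exists b, P a b) -> exists g : A -> B, forall a, P a (g a).
Proof. intros H. exists (fun a => proj1_sig (constructive_indefinite_description _ (H a))).
 intros a. exact (proj2_sig (constructive_indefinite_description _ (H a))). Qed.

Definition closed {X : TopSpace} (C : X -> Prop) := is_open (fun x => ~ C x).
Definition cpt {X : TopSpace} (K : X -> Prop) := forall G : X -> X -> Prop,
  (forall z, K z -> is_open (G z) /\ G z z) ->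
  exists lz, (forall z, In z lz -> K z) /\ (forall x, K x -> exists z, In z lz /\ G z x).

Lemma open_finite_inter {X : TopSpace} {T} (l : list T) (P : T -> Prop) (G : T -> X -> Prop) :
  (forall t, In t l -> P t -> is_open (G t)) -> is_open (fun w => forall t, In t l -> P t -> G t w).
Proof. induction l; intros H.
 - apply (is_open_ext (fun _ => True)); [intros; simpl; split; intros; [contradiction|auto]| apply open_full].
 - apply (is_open_ext (fun w => (P a -> G a w) /\ (forall t, In t l -> P t -> G t w))).
   + intros w; split. intros [H1 H2] t [<-|Ht] Hp; auto. intros H1; split; intros; apply H1; simpl; auto.
   + apply open_inter; [|apply IHl; intros; apply H; simpl; auto].
     destruct (classic (P a)) as [Hp|Hp].
     * apply (is_open_ext (G a)); [intros; tauto| apply H; simpl; auto].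
     * apply (is_open_ext (fun _ => True)); [intros; tauto| apply open_full]. Qed.

Lemma open_union_idx {X : TopSpace} {T} (P : T -> Prop) (G : T -> X -> Prop) :
  (forall t, P t -> is_open (G t)) -> is_open (fun w => exists t, P t /\ G t w).
Proof. intros H. apply (is_open_ext (fun w => exists U, (fun U => exists t, P t /\ U = G t) U /\ U w)).
 - intros w; split. intros [U [[t [Hp ->]] Hw]]; eauto. intros [t [Hp Hw]]; exists (G t); eauto.
 - apply open_union. intros U [t [Hp ->]]; auto. Qed.

Lemma cpt_aux {X : TopSpace} (K : X -> Prop) (G : X -> X -> Prop) (F : (X -> Prop) -> Prop) (lU : list (X -> Prop)) :
  (forall U, In U lU -> F U) ->
  (forall U, F U -> (exists z, K z /\ U = G z) \/ (forall x, K x -> ~ U x)) ->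
  exists lz, (forall z, In z lz -> K z) /\ (forall x, K x -> (exists U, In U lU /\ U x) -> exists z, In z lz /\ G z x).
Proof. induction lU; intros HF HFc.
 - exists nil; split; [simpl; tauto|]. intros x _ [U [[] _]].
 - destruct IHlU as [lz [H1 H2]]; [intros; apply HF; simpl; auto| auto|].
   destruct (HFc a (HF a (or_introl eq_refl))) as [[z [Kz ->]]|Hn].
   + exists (z :: lz); split. intros z' [<-|?]; auto.
     intros x Kx [U [[<-|HU] Ux]]. exists z; simpl; auto.
     destruct (H2 x Kx) as [z' [? ?]]; eauto. exists z'; simpl; auto.
   + exists lz; split; auto. intros x Kx [U [[<-|HU] Ux]]. exfalso; eapply Hn; eauto. eauto. Qed.

Lemma cpt_closed {X : TopSpace} (K : X -> Prop) : compact_space X -> closed K -> cpt K.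
Proof. intros Hc Hk G HG.
 set (F := fun U => (exists z, K z /\ U = G z) \/ U = (fun x => ~ K x)).
 destruct (Hc F) as [lU [HlU Hcov]].
 - intros U [[z [Kz ->]]| ->]; [apply HG; auto| exact Hk].
 - intros x. destruct (classic (K x)) as [Kx|Kx]. exists (G x); split; [left; eauto| apply HG; auto].
   exists (fun x => ~ K x); split; [right; auto| auto].
 - destruct (cpt_aux K G F lU HlU) as [lz [H1 H2]].
   + intros U [H| ->]; [left; auto| right; auto].
   + exists lz; split; auto. Qed.

Lemma cpt_all {X : TopSpace} : compact_space X -> cpt (fun _ : X => True).
Proof. intros Hc. apply cpt_closed; auto. apply (is_open_ext (fun _ => False)); [tauto| apply open_empty]. Qed.

Lemma cpt_image {X : TopSpace} (f : X -> X) (K : X -> Prop) : top_continuous f -> cpt K -> cpt (img f K).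
Proof. intros Hf Hk G HG. destruct (Hk (fun z w => G (f z) (f w))) as [lz [H1 H2]].
 - intros z Kz. destruct (HG (f z)) as [HG1 HG2]; [exists z; auto|]. split; [apply (Hf (G (f z))); auto| auto].
 - exists (map f lz); split.
   + intros y Hy. apply in_map_iff in Hy. destruct Hy as [z [<- Hz]]. exists z; auto.
   + intros y [x [Kx <-]]. destruct (H2 x Kx) as [z [? ?]]. exists (f z); split; auto. apply in_map; auto. Qed.

Lemma sep_point_cpt {X : TopSpace} (K : X -> Prop) (x : X) : hausdorff X -> cpt K -> ~ K x ->
  exists U V, is_open U /\ is_open V /\ U x /\ (forall z, K z -> V z) /\ (forall z, ~ (U z /\ V z)).
Proof. intros Hh Hk Kx.
 assert (Hch : forall z, exists p : (X -> Prop) * (X -> Prop), K z -> is_open (fst p) /\ is_open (snd p) /\ fst p x /\ snd p z /\ forall w, ~ (fst p w /\ snd p w)).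
 { intros z. destruct (classic (K z)) as [Kz|Kz].
   - assert (x <> z) by (intro; subst; contradiction). destruct (Hh x z H) as [U [V [? [? [? [? ?]]]]]].
     exists (U, V); simpl; auto.
   - exists ((fun _ => True), (fun _ => True)); intros; contradiction. }
 destruct (choice_fun _ Hch) as [g Hg].
 destruct (Hk (fun z => snd (g z))) as [lz [H1 H2]]. { intros z Kz; destruct (Hg z Kz) as [? [? [? [? ?]]]]; auto. }
 exists (fun w => forall z, In z lz -> True -> fst (g z) w), (fun w => exists z, In z lz /\ snd (g z) w).
 split; [apply open_finite_inter; intros t Ht _; destruct (Hg t (H1 t Ht)) as [? [? ?]]; auto|].
 split; [apply open_union_idx; intros t Ht; destruct (Hg t (H1 t Ht)) as [? [? ?]]; auto|].
 split; [intros z Hz _; destruct (Hg z (H1 z Hz)) as [? [? [? ?]]]; auto|].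
 split; [intros z Kz; destruct (H2 z Kz) as [z' [? ?]]; eauto|].
 intros w [Hw [z [Hz Hw']]]. destruct (Hg z (H1 z Hz)) as [? [? [? [? Hd]]]]; auto. specialize (Hw z Hz I). apply (Hd w); split; auto. Qed.

Lemma sep_cpt_cpt {X : TopSpace} (A B : X -> Prop) : hausdorff X -> cpt A -> cpt B -> (forall x, A x -> ~ B x) ->
  exists U V, is_open U /\ is_open V /\ (forall z, A z -> U z) /\ (forall z, B z -> V z) /\ (forall z, ~ (U z /\ V z)).
Proof. intros Hh Ha Hb Hab.
 assert (Hch : forall a, exists p : (X -> Prop) * (X -> Prop), A a -> is_open (fst p) /\ is_open (snd p) /\ fst p a /\ (forall z, B z -> snd p z) /\ forall w, ~ (fst p w /\ snd p w)).
 { intros a. destruct (classic (A a)) as [Aa|Aa].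
   - destruct (sep_point_cpt B a Hh Hb (Hab a Aa)) as [U [V ?]]. exists (U, V); simpl; auto.
   - exists ((fun _ => True), (fun _ => True)); intros; contradiction. }
 destruct (choice_fun _ Hch) as [g Hg].
 destruct (Ha (fun z => fst (g z))) as [lz [H1 H2]]. { intros z Kz; destruct (Hg z Kz) as [? [? [? [? ?]]]]; auto. }
 exists (fun w => exists z, In z lz /\ fst (g z) w), (fun w => forall z, In z lz -> True -> snd (g z) w).
 split; [apply open_union_idx; intros t Ht; destruct (Hg t (H1 t Ht)) as [? [? ?]]; auto|].
 split; [apply open_finite_inter; intros t Ht _; destruct (Hg t (H1 t Ht)) as [? [? ?]]; auto|].
 split; [intros z Az; destruct (H2 z Az) as [z' [? ?]]; eauto|].
 split; [intros z Bz z' Hz' _; destruct (Hg z' (H1 z' Hz')) as [? [? [? [? ?]]]]; auto|].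
 intros w [[z [Hz Hw']] Hw]. destruct (Hg z (H1 z Hz)) as [? [? [? [? Hd]]]]; auto. specialize (Hw z Hz I). apply (Hd w); split; auto. Qed.

Lemma closure_incl {X : TopSpace} (S : X -> Prop) x : S x -> top_closure S x.
Proof. intros Sx U _ Ux; eauto. Qed.
Lemma not_closure {X : TopSpace} (S : X -> Prop) x : ~ top_closure S x <-> exists U, is_open U /\ U x /\ forall z, U z -> ~ S z.
Proof. split.
 - intros H. apply not_all_ex_not in H. destruct H as [U H].
   exists U. destruct (classic (is_open U)); [|tauto]. destruct (classic (U x)); [|tauto].
   repeat split; auto. intros z Uz Sz. apply H; intros; eauto.
 - intros [U [HU [Ux HUS]]] Hc. destruct (Hc U HU Ux) as [z [? ?]]. eapply HUS; eauto. Qed.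
Lemma closure_closed {X : TopSpace} (S : X -> Prop) : closed (top_closure S).
Proof. unfold closed. apply (is_open_ext (fun x => exists U, (fun U => is_open U /\ forall z, U z -> ~ S z) U /\ U x)).
 - intros x. rewrite not_closure. split; [intros [U [[? ?] ?]]; eauto| intros [U [? [? ?]]]; eauto].
 - apply open_union; tauto. Qed.
Lemma closure_min {X : TopSpace} (S C : X -> Prop) : closed C -> (forall x, S x -> C x) -> forall x, top_closure S x -> C x.
Proof. intros Hc HS x Hx. destruct (classic (C x)) as [?|Hn]; auto. exfalso.
 destruct (Hx _ Hc Hn) as [z [Hz Sz]]. apply Hz; auto. Qed.
Lemma closure_mono {X : TopSpace} (S T : X -> Prop) : (forall x, S x -> T x) -> forall x, top_closure S x -> top_closure T x.
Proof. intros H x Hx U HU Ux. destruct (Hx U HU Ux) as [z [? ?]]; eauto. Qed.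
Lemma closed_compl_open {X : TopSpace} (U : X -> Prop) : is_open U -> closed (fun x => ~ U x).
Proof. intros H. unfold closed. apply (is_open_ext U); auto. intros; tauto. Qed.
Lemma open_compl_closed {X : TopSpace} (C : X -> Prop) : closed C -> is_open (fun x => ~ C x).
Proof. auto. Qed.

Lemma point_closed {X : TopSpace} (x : X) : hausdorff X -> closed (fun z => z = x).
Proof. intros Hh. unfold closed.
 apply (is_open_ext (fun w => exists U, (fun U => is_open U /\ ~ U x) U /\ U w)).
 - intros w; split. intros [U [[? ?] ?]] ->; contradiction.
   intros Hw. destruct (Hh w x Hw) as [U [V [? [? [? [? Hd]]]]]]. exists U; repeat split; auto.
   intro Ux; apply (Hd x); auto.
 - apply open_union; tauto. Qed.

Lemma interp {X : TopSpace} (A O : X -> Prop) : compact_space X -> hausdorff X -> closed A -> is_open O -> (forall x, A x -> O x) ->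
  exists W, is_open W /\ (forall x, A x -> W x) /\ (forall x, top_closure W x -> O x).
Proof. intros Hc Hh HA HO HAO.
 destruct (sep_cpt_cpt A (fun x => ~ O x) Hh (cpt_closed A Hc HA) (cpt_closed _ Hc (closed_compl_open O HO))) as [U [V [? [? [? [? Hd]]]]]].
 { intros x Ax HO'; apply HO'; auto. }
 exists U; repeat split; auto. intros x Hx. destruct (classic (O x)) as [?|Hn]; auto. exfalso.
 destruct (Hx V H0 (H2 x Hn)) as [z [? ?]]. apply (Hd z); auto. Qed.

Lemma disjoint_family {X : TopSpace} (l : list X) : hausdorff X ->
  exists V : X -> X -> Prop, (forall x, In x l -> is_open (V x) /\ V x x) /\
     (forall x y w, In x l -> In y l -> V x w -> V y w -> x = y).
Proof. intros Hh.
 assert (Hch : forall p : X * X, exists q : (X -> Prop) * (X -> Prop), fst p <> snd p -> is_open (fst q) /\ is_open (snd q) /\ fst q (fst p) /\ snd q (snd p) /\ forall w, ~ (fst q w /\ snd q w)).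
 { intros [a b]. simpl. destruct (classic (a = b)) as [E|E]. exists ((fun _ => True), (fun _ => True)); intros; contradiction.
   destruct (Hh a b E) as [U [V ?]]. exists (U, V); simpl; auto. }
 destruct (choice_fun _ Hch) as [g Hg].
 exists (fun x w => forall z, In z l -> z <> x -> fst (g (x, z)) w /\ snd (g (z, x)) w). split.
 - intros x Hx. split.
   + apply open_finite_inter. intros z _ Hz. destruct (Hg (x, z)) as [? [? ?]]; simpl; auto.
     destruct (Hg (z, x)) as [? [? ?]]; simpl; auto. apply open_inter; auto.
   + intros z _ Hz. destruct (Hg (x, z)) as [? [? [? ?]]]; simpl; auto. destruct (Hg (z, x)) as [? [? [? [? ?]]]]; simpl; auto.
 - intros x y w Hx Hy Vx Vy. destruct (classic (x = y)) as [?|E]; auto. exfalso.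
   destruct (Vx y Hy (fun h => E (eq_sym h))) as [H1 _]. destruct (Vy x Hx E) as [_ H2].
   destruct (Hg (x, y)) as [? [? [? [? Hd]]]]; simpl; auto. apply (Hd w); auto. Qed.

Fixpoint chain {X : TopSpace} (V0 Oo : X -> Prop) (ip : (X -> Prop) * (X -> Prop) -> (X -> Prop)) (n k : nat) : X -> Prop :=
  match n with
  | O => match k with O => V0 | S _ => Oo end
  | S m => if Nat.even k then chain V0 Oo ip m (Nat.div2 k)
           else ip (chain V0 Oo ip m (Nat.div2 k), chain V0 Oo ip m (S (Nat.div2 k)))
  end.

Definition ip_spec {X : TopSpace} (ip : (X -> Prop) * (X -> Prop) -> (X -> Prop)) :=
  forall P Q, ((is_open Q /\ forall x, top_closure P x -> Q x) ->
     is_open (ip (P, Q)) /\ (forall x, top_closure P x -> ip (P, Q) x) /\ (forall x, top_closure (ip (P, Q)) x -> Q x))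
   /\ (~ (is_open Q /\ forall x, top_closure P x -> Q x) -> ip (P, Q) = Q).

Lemma chain_S {X : TopSpace} V0 Oo ip n k : @chain X V0 Oo ip (S n) k = if Nat.even k then chain V0 Oo ip n (Nat.div2 k)
           else ip (chain V0 Oo ip n (Nat.div2 k), chain V0 Oo ip n (S (Nat.div2 k))).
Proof. reflexivity. Qed.
Lemma chain_even {X : TopSpace} V0 Oo ip n j : @chain X V0 Oo ip (S n) (2 * j) = chain V0 Oo ip n j.
Proof. rewrite chain_S. rewrite Nat.even_even, Nat.div2_double. reflexivity. Qed.
Lemma chain_odd {X : TopSpace} V0 Oo ip n j : @chain X V0 Oo ip (S n) (S (2 * j)) = ip (chain V0 Oo ip n j, chain V0 Oo ip n (S j)).
Proof. rewrite chain_S. replace (Nat.even (S (2 * j))) with false. rewrite Nat.div2_succ_double. reflexivity.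
 rewrite Nat.even_succ, Nat.odd_even. reflexivity. Qed.

Definition chain_inv {X : TopSpace} (V0 Oo : X -> Prop) (C : nat -> X -> Prop) (n : nat) :=
  (forall k, is_open (C k)) /\
  (forall k, (k < 2 ^ n)%nat -> forall x, top_closure (C k) x -> C (S k) x) /\
  (forall k, (2 ^ n <= k)%nat -> forall x, C k x <-> Oo x).

Lemma chain_inv_all {X : TopSpace} V0 Oo ip : ip_spec ip -> is_open V0 -> is_open Oo -> (forall x, top_closure V0 x -> Oo x) ->
  forall n, chain_inv V0 Oo (@chain X V0 Oo ip n) n.
Proof. intros Hip HV0 HOo HV0O. induction n.
 - split; [|split].
   + intros [|k]; simpl; auto.
   + intros k Hk. simpl in Hk. assert (k = 0%nat) by lia. subst. simpl. auto.
   + intros k Hk x. simpl in Hk. destruct k; [lia|]. simpl; tauto.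
 - destruct IHn as [I1 [I2 I3]]. set (C := chain V0 Oo ip n) in *.
   assert (Cond : forall j, (j < 2 ^ n)%nat -> is_open (C (S j)) /\ forall x, top_closure (C j) x -> C (S j) x) by (intros; split; auto).
   split; [|split].
   + intros k. destruct (even_odd_cor k) as [j [->| ->]]; [rewrite chain_even; fold C; auto|rewrite chain_odd; fold C].
     destruct (classic (is_open (C (S j)) /\ forall x, top_closure (C j) x -> C (S j) x)) as [Hc|Hc].
     * apply (proj1 (Hip _ _) Hc).
     * rewrite (proj2 (Hip _ _) Hc). auto.
   + intros k Hk x Hx. simpl in Hk. destruct (even_odd_cor k) as [j [->| ->]].
     * rewrite chain_even in Hx; fold C in Hx. rewrite chain_odd; fold C. apply (proj1 (Hip _ _) (Cond j ltac:(lia))). auto.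
     * rewrite chain_odd in Hx; fold C in Hx. replace (S (S (2 * j))) with (2 * S j)%nat by lia. rewrite chain_even; fold C.
       apply (proj1 (Hip _ _) (Cond j ltac:(lia))). auto.
   + intros k Hk x. simpl in Hk. destruct (even_odd_cor k) as [j [->| ->]].
     * rewrite chain_even; fold C. apply I3. lia.
     * rewrite chain_odd; fold C. destruct (classic (is_open (C (S j)) /\ forall x, top_closure (C j) x -> C (S j) x)) as [Hc|Hc].
       -- destruct (proj1 (Hip _ _) Hc) as [_ [Ha Hb]]. split.
          ++ intros Hx. apply (I3 (S j)); [lia|]. apply Hb. apply closure_incl; auto.
          ++ intros Hx. apply Ha. apply closure_incl. apply (I3 j); auto. lia.
       -- rewrite (proj2 (Hip _ _) Hc). apply I3. lia. Qed.

Lemma chain_mono {X : TopSpace} V0 Oo (C : nat -> X -> Prop) n : chain_inv V0 Oo C n ->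
  forall k j x, (k <= j)%nat -> C k x -> C j x.
Proof. intros [I1 [I2 I3]] k j x Hkj Hx. induction Hkj; auto.
 destruct (lt_dec m (2 ^ n)) as [Hl|Hl].
 - apply I2; auto. apply closure_incl; auto.
 - apply (I3 (S m)); [lia|]. apply (I3 m); auto. lia. Qed.

Fixpoint cnt (P : nat -> Prop) (N : nat) : nat :=
  match N with O => O | S M => (cnt P M + if excluded_middle_informative (P M) then 0 else 1)%nat end.

Lemma cnt_le P N : (cnt P N <= N)%nat.
Proof. induction N; simpl; auto. destruct (excluded_middle_informative (P N)); lia. Qed.

Lemma cnt_spec (P : nat -> Prop) : (forall k, P k -> P (S k)) -> forall N k, (k < N)%nat -> (P k <-> (cnt P N <= k)%nat).
Proof. intros Hm. assert (Hm' : forall k j, (k <= j)%nat -> P k -> P j) by (intros k j H; induction H; auto).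
 induction N; intros k Hk; [lia|]. simpl.
 destruct (excluded_middle_informative (P N)) as [HP|HP].
 - destruct (Nat.eq_dec k N) as [->|Hne].
   + pose proof (cnt_le P N). split; intros; auto; lia.
   + rewrite Nat.add_0_r. apply IHN. lia.
 - assert (Hall : forall k, (k <= N)%nat -> ~ P k) by (intros j Hj Hpj; apply HP; eapply Hm'; eauto).
   assert (cnt P N = N). { destruct N; [reflexivity|]. pose proof (cnt_le P (S N)).
     assert (~ (cnt P (S N) <= N)%nat) by (intro Hc; apply (Hall N); [lia|]; apply (IHN N); [lia|auto]). lia. }
   rewrite H. split; intros Hc. exfalso; apply (Hall k); auto; lia. lia. Qed.

Lemma inf_exists (u : nat -> R) (m : R) : (forall n, m <= u n) ->
  exists l, (forall n, l <= u n) /\ (forall b, (forall n, b <= u n) -> b <= l).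
Proof. intros Hm. destruct (completeness (fun r => exists n, r = - u n)) as [s [Hs1 Hs2]].
 - exists (- m). intros r [n ->]. specialize (Hm n). lra.
 - exists (- u 0%nat); eauto.
 - exists (- s). split.
   + intros n. assert (- u n <= s) by (apply Hs1; eauto). lra.
   + intros b Hb. assert (s <= - b). { apply Hs2. intros r [n ->]. specialize (Hb n). lra. } lra. Qed.

Lemma pow2_pos n : 0 < 2 ^ n.
Proof. apply pow_lt; lra. Qed.

Lemma pow2_large eps : 0 < eps -> exists n, 3 / 2 ^ n < eps.
Proof. intros He. destruct (archimed (3 / eps)) as [H1 _].
 assert (Hz : (0 <= up (3 / eps))%Z). { apply le_IZR. assert (0 < 3 / eps) by (apply Rdiv_lt_0_compat; lra). lra. }
 exists (Z.to_nat (up (3 / eps))). set (n := Z.to_nat (up (3 / eps))).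
 assert (INR n = IZR (up (3/eps))) by (unfold n; rewrite INR_IZR_INZ, Z2Nat.id; auto).
 assert (INR n <= 2 ^ n). { clear. induction n. simpl; lra. rewrite S_INR. simpl.
   assert (1 <= 2 ^ n) by (apply pow_R1_Rle; lra). lra. }
 assert (3 / eps < 2 ^ n) by lra. pose proof (pow2_pos n).
 apply (Rmult_lt_reg_r (2 ^ n)); auto. unfold Rdiv. rewrite Rmult_assoc, Rinv_l by lra.
 apply (Rmult_lt_reg_l (/ eps)). apply Rinv_0_lt_compat; auto.
 replace (/ eps * (3 * 1)) with (3 / eps) by (field; lra). replace (/ eps * (eps * 2 ^ n)) with (2 ^ n) by (field; lra). lra. Qed.

Lemma urysohn {X : TopSpace} (A Oo : X -> Prop) : compact_space X -> hausdorff X -> closed A -> is_open Oo ->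
  (forall x, A x -> Oo x) ->
  exists f : X -> R, contR f /\ (forall x, 0 <= f x <= 1) /\ (forall x, A x -> f x = 1) /\ (forall x, ~ Oo x -> f x = 0).
Proof. intros Hc Hh HA HO HAO.
 destruct (interp A Oo Hc Hh HA HO HAO) as [V0 [HV0 [HAV0 HV0O]]].
 assert (Hipx : forall PQ : (X -> Prop) * (X -> Prop), exists W,
   ((is_open (snd PQ) /\ forall x, top_closure (fst PQ) x -> snd PQ x) ->
     is_open W /\ (forall x, top_closure (fst PQ) x -> W x) /\ (forall x, top_closure W x -> snd PQ x))
   /\ (~ (is_open (snd PQ) /\ forall x, top_closure (fst PQ) x -> snd PQ x) -> W = snd PQ)).
 { intros [P Q]; simpl. destruct (classic (is_open Q /\ forall x, top_closure P x -> Q x)) as [Hcd|Hcd].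
   - destruct (interp (top_closure P) Q Hc Hh (closure_closed P) (proj1 Hcd) (proj2 Hcd)) as [W ?].
     exists W; split; tauto.
   - exists Q; split; tauto. }
 destruct (choice_fun _ Hipx) as [ip Hip]. assert (Hips : ip_spec ip) by (intros P Q; apply (Hip (P, Q))).
 pose proof (chain_inv_all V0 Oo ip Hips HV0 HO HV0O) as Inv.
 set (C := chain V0 Oo ip).
 assert (C0 : forall n x, C n 0%nat x <-> V0 x). { intros n x. unfold C. induction n; simpl; tauto. }
 set (c := fun n x => cnt (fun k => C n k x) (S (2 ^ n))).
 assert (Hspec : forall n x k, (k <= 2 ^ n)%nat -> (C n k x <-> (c n x <= k)%nat)).
 { intros n x k Hk. unfold c; apply (cnt_spec (fun k => C n k x)); [|lia]. intros j Hj. apply (chain_mono V0 Oo (C n) n (Inv n) j); auto. }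
 assert (Hcle : forall n x, (c n x <= S (2 ^ n))%nat) by (intros; apply cnt_le).
 assert (Hrel : forall n x, (c (S n) x <= 2 * c n x <= S (c (S n) x))%nat).
 { intros n x. split.
   - destruct (le_lt_dec (c n x) (2 ^ n)) as [Hl|Hl].
     + assert (C n (c n x) x) by (apply Hspec; auto). assert (C (S n) (2 * c n x)%nat x) by (unfold C; rewrite chain_even; auto).
       apply (Hspec (S n) x). simpl. lia. auto.
     + specialize (Hcle (S n) x). simpl in Hcle. lia.
   - destruct (le_lt_dec (c (S n) x) (2 ^ S n)) as [Hl|Hl].
     + assert (H1 : C (S n) (c (S n) x) x) by (apply Hspec; auto).
       destruct (even_odd_cor (c (S n) x)) as [j [Hj|Hj]]; rewrite Hj in H1 |- *.
       * unfold C in H1; rewrite chain_even in H1. assert (c n x <= j)%nat. { apply (proj1 (Hspec n x j ltac:(simpl in Hl; lia))); auto. } lia.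
       * assert (H2 : C (S n) (2 * S j)%nat x). { apply (chain_mono V0 Oo (C (S n)) (S n) (Inv (S n)) (S (2 * j))); [lia| auto]. }
         unfold C in H2; rewrite chain_even in H2. assert (c n x <= S j)%nat. { apply (proj1 (Hspec n x (S j) ltac:(simpl in Hl; lia))); auto. } lia.
     + specialize (Hcle n x). simpl in Hl. lia. }
 set (g := fun n x => INR (c n x) / 2 ^ n).
 assert (Hg0 : forall n x, 0 <= g n x) by (intros; unfold g; apply Rmult_le_pos; [apply pos_INR| left; apply Rinv_0_lt_compat, pow2_pos]).
 assert (Hg1 : forall n x, g (S n) x <= g n x /\ g n x <= g (S n) x + 1 / 2 ^ (S n)).
 { intros n x. destruct (Hrel n x) as [Ha Hb]. apply le_INR in Ha. apply le_INR in Hb.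
   rewrite mult_INR in Ha, Hb. rewrite (S_INR (c (S n) x)) in Hb. change (INR 2) with (1+1) in Ha, Hb. unfold g. pose proof (pow2_pos n). simpl pow.
   set (a := INR (c (S n) x)) in *. set (b := INR (c n x)) in *. set (p := 2 ^ n) in *.
   assert (0 <= / p) by (left; apply Rinv_0_lt_compat; lra). split.
   - replace (a / (2 * p)) with ((a / 2) * / p) by (field; lra). replace (b / p) with (b * / p) by (unfold Rdiv; ring).
     apply Rmult_le_compat_r; lra.
   - replace (a / (2 * p) + 1 / (2 * p)) with (((a + 1) / 2) * / p) by (field; lra). replace (b / p) with (b * / p) by (unfold Rdiv; ring).
     apply Rmult_le_compat_r; lra. }
 assert (Hg2 : forall n m x, g (n + m)%nat x <= g n x /\ g n x - 1 / 2 ^ n + 1 / 2 ^ (n + m) <= g (n + m)%nat x).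
 { intros n m x. induction m. rewrite Nat.add_0_r. lra.
   replace (n + S m)%nat with (S (n + m)) by lia. destruct (Hg1 (n + m)%nat x).
   assert (1 / 2 ^ S (n + m) = 1 / 2 ^ (n + m) / 2) by (simpl; field; pose proof (pow2_pos (n+m)); lra). lra. }
 assert (Hg3 : forall n m x, g n x - 1 / 2 ^ n <= g m x).
 { intros n m x. destruct (le_lt_dec n m) as [Hl|Hl].
   - replace m with (n + (m - n))%nat by lia. destruct (Hg2 n (m - n)%nat x).
     assert (0 < 1 / 2 ^ (n + (m - n))) by (apply Rdiv_lt_0_compat; [lra| apply pow2_pos]). lra.
   - replace n with (m + (n - m))%nat by lia. destruct (Hg2 m (n - m)%nat x).
     assert (0 < 1 / 2 ^ (m + (n - m))) by (apply Rdiv_lt_0_compat; [lra| apply pow2_pos]). lra. }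
 assert (Hf : forall x, exists l, (forall n, l <= g n x) /\ (forall b, (forall n, b <= g n x) -> b <= l)).
 { intros x. apply (inf_exists (fun n => g n x) 0). intros; auto. }
 destruct (choice_fun _ Hf) as [f Hfs].
 assert (Hf1 : forall n x, g n x - 1 / 2 ^ n <= f x <= g n x).
 { intros n x. destruct (Hfs x) as [Ha Hb]. split; [apply Hb; intros m; auto| auto]. }
 assert (Hf0 : forall x, 0 <= f x). { intros x. destruct (Hfs x) as [Ha Hb]. apply Hb. auto. }
 assert (Hfc : contR f).
 { intros x eps He. destruct (pow2_large eps He) as [n Hn]. set (k := c n x).
   assert (HI := Inv n). destruct HI as [I1 [I2 I3]].
   set (W1 := fun y => (k <= 2 ^ n)%nat -> C n k y).
   set (W2 := fun y => (2 <= k)%nat -> ~ top_closure (C n (k - 2)%nat) y).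
   exists (fun y => W1 y /\ W2 y). split; [|split].
   - apply open_inter.
     + unfold W1. destruct (le_lt_dec k (2 ^ n)) as [Hl|Hl].
       * apply (is_open_ext (C n k)); auto. intros; tauto.
       * apply (is_open_ext (fun _ => True)); [intros; split; intros; [lia|auto]| apply open_full].
     + unfold W2. destruct (le_lt_dec 2 k) as [Hl|Hl].
       * apply (is_open_ext (fun y => ~ top_closure (C n (k - 2)%nat) y)); [intros; tauto| apply closure_closed].
       * apply (is_open_ext (fun _ => True)); [intros; split; intros; [lia|auto]| apply open_full].
   - split.
     + intros Hk. apply (proj2 (Hspec n x k Hk)). unfold k; lia.
     + intros Hk Hcl. assert (C n (S (k - 2)) x) by (apply I2; auto; unfold k in *; specialize (Hcle n x); lia).
       assert (Hle := proj1 (Hspec n x (S (k-2)) ltac:(unfold k in *; specialize (Hcle n x); lia)) H). unfold k in *; lia.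
   - intros y [Hy1 Hy2]. assert (Hky : (c n y <= k <= S (c n y))%nat).
     { split.
       - destruct (le_lt_dec k (2 ^ n)) as [Hl|Hl]. apply (proj1 (Hspec n y k Hl)); auto. specialize (Hcle n y). lia.
       - destruct (le_lt_dec 2 k) as [Hl|Hl]; [|lia].
         assert (~ C n (k - 2)%nat y) by (intro; apply Hy2; auto; apply closure_incl; auto).
         assert (~ (c n y <= k - 2)%nat) by (intro Hc'; apply H; apply (proj2 (Hspec n y (k-2)%nat ltac:(unfold k in *; specialize (Hcle n x); lia))); auto). lia. }
     assert (Rabs (g n y - g n x) <= 1 / 2 ^ n).
     { unfold g. fold k. destruct Hky as [Ha Hb]. apply le_INR in Ha. apply le_INR in Hb. rewrite S_INR in Hb.
       pose proof (pow2_pos n). apply Rabs_le. split; apply (Rmult_le_reg_r (2 ^ n)); auto; field_simplify; lra. }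
     destruct (Hf1 n x), (Hf1 n y).
     assert (3 / 2 ^ n = 3 * (1 / 2 ^ n)) by (field; pose proof (pow2_pos n); lra).
     revert H. unfold Rabs at 1. destruct (Rcase_abs _); intros; apply Rabs_def1; lra. }
 exists (fun x => 1 - Rmin (f x) 1). split; [|split; [|split]].
 - apply (contR_minus (fun _ => 1) (fun x => Rmin (f x) 1)). apply contR_const. apply contR_min1; auto.
 - intros x. specialize (Hf0 x). unfold Rmin; destruct (Rle_dec (f x) 1); lra.
 - intros x Ax. assert (Hc0 : forall n, c n x = 0%nat).
   { intros n. assert (C n 0%nat x) by (apply C0; auto). pose proof (proj1 (Hspec n x 0%nat ltac:(lia)) H). lia. }
   assert (f x <= 0). { destruct (Hf1 0%nat x). unfold g in H0. rewrite Hc0 in H0. simpl in H0. lra. }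
   specialize (Hf0 x). unfold Rmin; destruct (Rle_dec (f x) 1); lra.
 - intros x Ox. assert (Hcn : forall n, c n x = S (2 ^ n)).
   { intros n. assert (~ C n (2 ^ n)%nat x). { intros Hx. apply Ox. destruct (Inv n) as [_ [_ I3]]. apply (I3 (2^n)%nat); auto. }
     assert (~ (c n x <= 2 ^ n)%nat) by (intro Hh'; apply H; apply (proj2 (Hspec n x (2^n)%nat ltac:(lia))); auto).
     specialize (Hcle n x). lia. }
   assert (1 <= f x). { destruct (Hf1 0%nat x). unfold g in H. rewrite Hcn in H. simpl in H. lra. }
   unfold Rmin; destruct (Rle_dec (f x) 1); lra.
Qed.

Lemma bump {X : TopSpace} (x : X) (V : X -> Prop) : compact_space X -> hausdorff X -> is_open V -> V x ->
  exists b : X -> R, contR b /\ (forall z, 0 <= b z <= 1) /\ b x = 1 /\ (forall z, ~ V z -> b z = 0).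
Proof. intros Hc Hh HV Vx. destruct (urysohn (fun z => z = x) V Hc Hh (point_closed x Hh) HV) as [f [? [? [? ?]]]].
 intros; subst; auto. exists f; repeat split; auto; apply H0. Qed.

Lemma urysohn_supp {X : TopSpace} (A U : X -> Prop) : compact_space X -> hausdorff X -> closed A -> is_open U -> (forall x, A x -> U x) ->
  exists f : X -> R, contR f /\ (forall x, 0 <= f x <= 1) /\ (forall x, A x -> f x = 1) /\
    (forall x, top_closure (fun z => f z <> 0) x -> U x).
Proof. intros Hc Hh HA HU HAU. destruct (interp A U Hc Hh HA HU HAU) as [W [HW [HAW HWU]]].
 destruct (urysohn A W Hc Hh HA HW HAW) as [f [? [? [? Hf0]]]]. exists f; split; [auto| split; [auto| split; [auto|]]].
 intros y Hy. apply HWU. apply (closure_mono (fun z => f z <> 0)); auto.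
 intros z Hz. destruct (classic (W z)); auto. exfalso; apply Hz; auto. Qed.

Lemma cont_bounded {X : TopSpace} (f : X -> R) : compact_space X -> contR f -> exists M, forall x, Rabs (f x) <= M.
Proof. intros Hc Hf.
 assert (H : forall x, exists U, is_open U /\ U x /\ forall y, U y -> Rabs (f y - f x) < 1) by (intros; apply Hf; lra).
 destruct (choice_fun _ H) as [G HG]. destruct (cpt_all Hc G) as [lz [_ Hl]].
 - intros z _. destruct (HG z) as [? [? ?]]; auto.
 - exists (Rsum_list lz (fun z => Rabs (f z)) + 1). intros y. destruct (Hl y I) as [z [Hz Hy]].
   destruct (HG z) as [_ [_ H3]]. specialize (H3 y Hy).
   assert (Rabs (f z) <= Rsum_list lz (fun z => Rabs (f z))) by (apply (Rsum_list_ge_elem lz (fun z => Rabs (f z))); auto; intros; apply Rabs_pos).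
   replace (f y) with ((f y - f z) + f z) by ring. eapply Rle_trans; [apply Rabs_triang|lra]. Qed.

Lemma Rsum_ge_elem n f i : (forall j, (j < n)%nat -> 0 <= f j) -> (i < n)%nat -> f i <= Rsum n f.
Proof. induction n; intros H Hi; [lia|]. simpl. destruct (Nat.eq_dec i n) as [->|Hne].
 - assert (0 <= Rsum n f) by (apply Rsum_nonneg; auto). lra.
 - assert (f i <= Rsum n f) by (apply IHn; auto; lia). assert (0 <= f n) by auto. lra. Qed.

Lemma shrink {X : TopSpace} (n : nat) (U : nat -> X -> Prop) : compact_space X -> hausdorff X ->
  (forall i, (i < n)%nat -> is_open (U i)) -> (forall x, exists i, (i < n)%nat /\ U i x) ->
  forall k, (k <= n)%nat -> exists W : nat -> X -> Prop, (forall i, (i < k)%nat -> is_open (W i) /\ forall x, top_closure (W i) x -> U i x) /\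
    (forall x, exists i, (i < n)%nat /\ ((i < k)%nat -> W i x) /\ ((k <= i)%nat -> U i x)).
Proof. intros Hc Hh HU Hcov. induction k; intros Hk.
 - exists U; split; [intros; lia|]. intros x; destruct (Hcov x) as [i [? ?]]; exists i; repeat split; auto; lia.
 - destruct IHk as [W [HW1 HW2]]; [lia|].
   set (S := fun i x => ((i < k)%nat -> W i x) /\ ((k <= i)%nat -> U i x)).
   assert (HSo : forall i, (i < n)%nat -> is_open (S i)).
   { intros i Hi. unfold S. destruct (lt_dec i k) as [Hl|Hl].
     - apply (is_open_ext (W i)); [intros; split; [intros; split; auto; lia| intros [? ?]; auto] | apply HW1; auto].
     - apply (is_open_ext (U i)); [intros; split; [intros; split; auto; lia| intros [? ?]; apply H0; lia] | apply HU; auto]. }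
   set (A := fun x => forall i, (i < n)%nat -> i <> k -> ~ S i x).
   assert (HA : closed A).
   { unfold closed. apply (is_open_ext (fun x => exists i, ((i < n)%nat /\ i <> k) /\ S i x)).
     - intros x; unfold A; split. intros [i [[? ?] ?]] Hn. apply (Hn i); auto.
       intros Hn. apply not_all_ex_not in Hn. destruct Hn as [i Hn]. exists i.
       destruct (classic (i < n)%nat); [|tauto]. destruct (classic (i = k)); [tauto|]. split; auto. apply NNPP. tauto.
     - apply open_union_idx. intros i [? ?]; auto. }
   assert (HAU : forall x, A x -> U k x).
   { intros x Ax. destruct (HW2 x) as [i [Hi [Ha Hb]]]. destruct (Nat.eq_dec i k) as [->|Hne]; [apply Hb; lia|].
     exfalso. apply (Ax i Hi Hne). split; auto. }
   destruct (interp A (U k) Hc Hh HA (HU k ltac:(lia)) HAU) as [W' [HW' [HAW' HW'U]]].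
   exists (fun i => if Nat.eq_dec i k then W' else W i). split.
   + intros i Hi. destruct (Nat.eq_dec i k) as [->|Hne]; auto. apply HW1; lia.
   + intros x. destruct (classic (A x)) as [Ax|Ax].
     * exists k. repeat split; [lia| |intros; lia]. intros _. destruct (Nat.eq_dec k k); [auto|congruence].
     * unfold A in Ax. apply not_all_ex_not in Ax. destruct Ax as [i Ax].
       assert (i < n)%nat by (apply NNPP; tauto). assert (i <> k) by (apply NNPP; tauto). assert (S i x) by (apply NNPP; tauto).
       exists i. destruct H1 as [Ha Hb]. repeat split; auto.
       -- intros Hi. destruct (Nat.eq_dec i k); [congruence|]. apply Ha; lia.
       -- intros Hi. apply Hb; lia. Qed.

Lemma pou_exists {X : TopSpace} (n : nat) (U : nat -> X -> Prop) : compact_space X -> hausdorff X ->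
  (forall i, (i < n)%nat -> is_open (U i)) -> (forall x, exists i, (i < n)%nat /\ U i x) ->
  exists v, partition_of_unity_subordinate n U v.
Proof. intros Hc Hh HU Hcov. destruct (shrink n U Hc Hh HU Hcov n (le_n n)) as [W [HW1 HW2]].
 assert (Hf : forall i, exists f : X -> R, (i < n)%nat -> contR f /\ (forall x, 0 <= f x <= 1) /\ (forall x, top_closure (W i) x -> f x = 1) /\
    (forall x, top_closure (fun z => f z <> 0) x -> U i x)).
 { intros i. destruct (lt_dec i n) as [Hi|Hi].
   - destruct (urysohn_supp (top_closure (W i)) (U i) Hc Hh (closure_closed _) (HU i Hi) (proj2 (HW1 i Hi))) as [f Hf].
     exists f; auto.
   - exists (fun _ => 0); intros; lia. }
 destruct (choice_fun _ Hf) as [f Hfs].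
 set (S := fun x => Rsum n (fun i => f i x)).
 assert (HS1 : forall x, 1 <= S x).
 { intros x. destruct (HW2 x) as [i [Hi [Ha _]]]. unfold S.
   assert (f i x = 1) by (apply (Hfs i Hi); apply closure_incl; auto).
   rewrite <- H. apply (Rsum_ge_elem n (fun i => f i x)); auto. intros j Hj; apply (Hfs j Hj). }
 exists (fun i x => f i x / S x). split.
 - intros i Hi. destruct (Hfs i Hi) as [Hc1 [Hc2 [_ Hc4]]]. split; [|split].
   + apply contR_div; auto. apply contR_Rsum. intros; apply Hfs; auto. intros x; specialize (HS1 x); lra.
   + intros x. specialize (HS1 x). assert (f i x <= S x) by (apply (Rsum_ge_elem n (fun i => f i x)); auto; intros j Hj; apply (Hfs j Hj)).
     specialize (Hc2 x). split. apply Rmult_le_pos; [lra| left; apply Rinv_0_lt_compat; lra].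
     apply (Rmult_le_reg_r (S x)); [lra|]. unfold Rdiv. rewrite Rmult_assoc, Rinv_l; lra.
   + intros x Hx. apply Hc4. apply (closure_mono (fun z => f i z / S z <> 0)); auto.
     intros z Hz Hf0. apply Hz. rewrite Hf0. unfold Rdiv; ring.
 - intros x. unfold Rdiv. rewrite (Rsum_ext n _ (fun i => / S x * f i x)) by (intros; ring).
   rewrite Rsum_scal. fold (S x). specialize (HS1 x). field. lra. Qed.

Lemma lh_cover {X : TopSpace} (phi : X -> X) : compact_space X -> local_homeo phi ->
  exists n U, open_cover_homeo phi n U /\ (forall i, (i < n)%nat -> is_open (img phi (U i))).
Proof. intros Hc [Hpc Hl].
 destruct (choice_fun _ Hl) as [G HG].
 destruct (cpt_all Hc G) as [lz [_ Hlz]]. { intros z _. destruct (HG z) as [? [? ?]]; auto. }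
 exists (length lz), (fun i w => exists z, nth_error lz i = Some z /\ G z w).
 assert (Heq : forall i, (i < length lz)%nat -> exists z, nth_error lz i = Some z /\ forall w, (exists z, nth_error lz i = Some z /\ G z w) <-> G z w).
 { intros i Hi. destruct (nth_error lz i) as [z|] eqn:E. exists z; split; auto. intros w; split.
   intros [z' [E' ?]]. congruence. intros; eauto. apply nth_error_None in E. lia. }
 assert (Hext : forall (A B : X -> Prop), (forall w, A w <-> B w) -> A = B).
 { intros A B H. apply functional_extensionality; intros; apply propositional_extensionality; auto. }
 split; [split|].
 - intros i Hi. destruct (Heq i Hi) as [z [_ Hz]]. rewrite (Hext _ _ Hz). destruct (HG z) as [? [? [? ?]]]; auto.
 - intros x. destruct (Hlz x I) as [z [Hz Gx]]. apply In_nth_error in Hz. destruct Hz as [i Hi].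
   exists i. split; [apply nth_error_Some; congruence| eauto].
 - intros i Hi. destruct (Heq i Hi) as [z [_ Hz]]. rewrite (Hext _ _ Hz). destruct (HG z) as [? [? [? ?]]]; auto. Qed.

Definition RC {X : TopSpace} (g : X -> R) : X -> Cplx := fun x => RtoC (g x).
Arguments RC : simpl never.

Lemma L_ext {X : TopSpace} (L : (X -> Cplx) -> (X -> Cplx)) (a b : X -> Cplx) y : (forall x, a x = b x) -> L a y = L b y.
Proof. intros H. replace b with a; auto. apply functional_extensionality; auto. Qed.


Lemma L_scal {X : TopSpace} phi L (HT : is_transfer_operator phi L) (c : Cplx) (a : X -> Cplx) y :
  contC a -> L (fun x => Cmul c (a x)) y = Cmul c (L a y).
Proof. destruct HT as [_ [_ [H _]]]. auto. Qed.
Lemma L_add {X : TopSpace} phi L (HT : is_transfer_operator phi L) (a b : X -> Cplx) y :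
  contC a -> contC b -> L (fun x => Cadd (a x) (b x)) y = Cadd (L a y) (L b y).
Proof. destruct HT as [_ [H _]]. auto. Qed.
Lemma L_cont {X : TopSpace} phi L (HT : is_transfer_operator phi L) (a : X -> Cplx) : contC a -> contC (L a).
Proof. destruct HT as [H _]. auto. Qed.
Lemma L_pos {X : TopSpace} phi L (HT : is_transfer_operator phi L) (a : X -> Cplx) y : contC a -> (forall x, Cnonneg (a x)) -> Cnonneg (L a y).
Proof. destruct HT as [_ [_ [_ [H _]]]]. auto. Qed.
Lemma L_one {X : TopSpace} phi L (HT : is_transfer_operator phi L) y : L (fun _ : X => Defs.C1) y = Defs.C1.
Proof. destruct HT as [_ [_ [_ [_ [H _]]]]]. auto. Qed.
Lemma L_tr {X : TopSpace} phi L (HT : is_transfer_operator phi L) (a b : X -> Cplx) y : contC a -> contC b ->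
  L (fun x => Cmul (a (phi x)) (b x)) y = Cmul (a y) (L b y).
Proof. destruct HT as [_ [_ [_ [_ [_ H]]]]]. intros; apply H; auto. Qed.

Lemma L_zero {X : TopSpace} phi L (HT : is_transfer_operator phi L) y : L (fun _ : X => Defs.C0) y = Defs.C0.
Proof. rewrite (L_ext L _ (fun x => Cmul Defs.C0 Defs.C1)) by (intros; Cring). rewrite (L_scal phi L HT); auto.
 Cring. apply contC_const. Qed.

Lemma L_opp {X : TopSpace} phi L (HT : is_transfer_operator phi L) (a : X -> Cplx) y : contC a -> L (fun x => Copp (a x)) y = Copp (L a y).
Proof. intros. rewrite (L_ext L _ (fun x => Cmul (RtoC (-1)) (a x))) by (intros; Cring). rewrite (L_scal phi L HT); auto. Cring. Qed.

Lemma L_sub {X : TopSpace} phi L (HT : is_transfer_operator phi L) (a b : X -> Cplx) y : contC a -> contC b ->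
  L (fun x => Cadd (a x) (Copp (b x))) y = Cadd (L a y) (Copp (L b y)).
Proof. intros. rewrite (L_add phi L HT); auto. rewrite (L_opp phi L HT); auto. apply contC_opp; auto. Qed.

Lemma L_Csum {X : TopSpace} phi L (HT : is_transfer_operator phi L) n (f : nat -> X -> Cplx) y :
  (forall i, (i < n)%nat -> contC (f i)) -> L (fun x => Csum n (fun i => f i x)) y = Csum n (fun i => L (f i) y).
Proof. induction n; simpl; intros H. apply (L_zero phi L HT); auto.
 rewrite (L_add phi L HT); auto. rewrite IHn; auto. apply contC_Csum; auto. Qed.

Lemma L_Csum_list {X : TopSpace} {T} phi L (HT : is_transfer_operator phi L) (l : list T) (f : T -> X -> Cplx) y :
  (forall i, In i l -> contC (f i)) -> L (fun x => Csum_list l (fun i => f i x)) y = Csum_list l (fun i => L (f i) y).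
Proof. induction l; simpl; intros H. apply (L_zero phi L HT); auto.
 rewrite (L_add phi L HT (f a) (fun x => Csum_list l (fun i => f i x))); auto. rewrite IHl; auto.
 apply contC_Csum_list; auto. Qed.

Lemma L_nonneg {X : TopSpace} phi L (HT : is_transfer_operator phi L) (g : X -> R) y : contR g -> (forall x, 0 <= g x) ->
  snd (L (RC g) y) = 0 /\ 0 <= fst (L (RC g) y).
Proof. intros Hg Hp. destruct (L_pos phi L HT (RC g) y) as [? ?]; auto. apply contC_RtoC; auto.
 intros x; split; unfold RC; simpl; auto. Qed.

Lemma L_real {X : TopSpace} phi L (HT : is_transfer_operator phi L) (g : X -> R) y : contR g -> snd (L (RC g) y) = 0.
Proof. intros Hg.
 assert (Hp : contR (fun x => Rmax (g x) 0)) by (apply contR_max0; auto).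
 assert (Hn : contR (fun x => Rmax (- g x) 0)) by (apply contR_max0, contR_opp; auto).
 rewrite (L_ext L _ (fun x => Cadd (RC (fun x => Rmax (g x) 0) x) (Copp (RC (fun x => Rmax (- g x) 0) x)))).
 - rewrite (L_sub phi L HT); try apply contC_RtoC; auto. simpl.
   rewrite (proj1 (L_nonneg phi L HT _ y Hp (fun x => Rmax_r _ _))), (proj1 (L_nonneg phi L HT _ y Hn (fun x => Rmax_r _ _))). ring.
 - intros x. unfold RC. apply pair_eq; simpl; [|ring]. unfold Rmax; destruct (Rle_dec (g x) 0), (Rle_dec (- g x) 0); lra. Qed.

Lemma L_mono {X : TopSpace} phi L (HT : is_transfer_operator phi L) (g h : X -> R) y : contR g -> contR h -> (forall x, g x <= h x) ->
  fst (L (RC g) y) <= fst (L (RC h) y).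
Proof. intros Hg Hh Hgh. assert (Hd : contR (fun x => h x - g x)) by (apply contR_minus; auto).
 destruct (L_nonneg phi L HT _ y Hd) as [_ H]. intros x; specialize (Hgh x); lra.
 rewrite (L_ext L _ (fun x => Cadd (RC h x) (Copp (RC g x)))) in H by (intros x; unfold RC; apply pair_eq; simpl; ring).
 rewrite (L_sub phi L HT) in H; try apply contC_RtoC; auto. simpl in H. lra. Qed.

Lemma L_scalR {X : TopSpace} phi L (HT : is_transfer_operator phi L) (c : R) (g : X -> R) y : contR g ->
  fst (L (RC (fun x => c * g x)) y) = c * fst (L (RC g) y).
Proof. intros Hg. rewrite (L_ext L _ (fun x => Cmul (RtoC c) (RC g x))) by (intros x; unfold RC; apply pair_eq; simpl; ring).
 rewrite (L_scal phi L HT). simpl. rewrite (L_real phi L HT g y Hg). ring. auto. apply contC_RtoC; auto. Qed.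

Lemma L_bound {X : TopSpace} phi L (HT : is_transfer_operator phi L) (g b : X -> R) (M : R) y : contR g -> contR b ->
  (forall x, Rabs (g x) <= M * b x) -> Rabs (fst (L (RC g) y)) <= M * fst (L (RC b) y).
Proof. intros Hg Hb Hgb. assert (HMb : contR (fun x => M * b x)) by (apply contR_scal; auto).
 assert (H1 := L_mono phi L HT g (fun x => M * b x) y Hg HMb).
 assert (H2 := L_mono phi L HT (fun x => - (M * b x)) g y (contR_opp _ HMb) Hg).
 rewrite (L_scalR phi L HT) in H1 by auto.
 rewrite (L_ext L (RC (fun x => - (M * b x))) (fun x => Copp (RC (fun x => M * b x) x))) in H2 by (intros x; unfold RC; apply pair_eq; simpl; ring).
 rewrite (L_opp phi L HT) in H2 by (apply contC_RtoC; auto). simpl in H2. rewrite (L_scalR phi L HT) in H2 by auto.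
 apply Rabs_le. split; [apply H2| apply H1]; intros x; specialize (Hgb x); revert Hgb; unfold Rabs; destruct (Rcase_abs (g x)); simpl; intros; lra. Qed.

Lemma L_split {X : TopSpace} phi L (HT : is_transfer_operator phi L) (a : X -> Cplx) y : contC a ->
  L a y = (fst (L (RC (fun x => fst (a x))) y), fst (L (RC (fun x => snd (a x))) y)).
Proof. intros Ha. rewrite (L_ext L a (fun x => Cadd (RC (fun x => fst (a x)) x) (Cmul (0, 1) (RC (fun x => snd (a x)) x)))).
 - rewrite (L_add phi L HT). rewrite (L_scal phi L HT).
   apply pair_eq; simpl. rewrite (L_real phi L HT (fun x => snd (a x)) y). ring. apply contC_snd; auto.
   rewrite (L_real phi L HT (fun x => fst (a x)) y). ring. apply contC_fst; auto.
   apply contC_RtoC, contC_snd; auto. apply contC_RtoC, contC_fst; auto.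
   apply contC_mul. apply contC_const. apply contC_RtoC, contC_snd; auto.
 - intros x. unfold RC. apply pair_eq; simpl; ring. Qed.

Lemma Csum_ext n f g : (forall i, (i < n)%nat -> f i = g i) -> Csum n f = Csum n g.
Proof. induction n; simpl; intros; auto. rewrite IHn, H; auto. Qed.

Lemma Csum_RtoC_mul n (r : nat -> R) (z : Cplx) : Csum n (fun i => Cmul (RtoC (r i)) z) = Cmul (RtoC (Rsum n r)) z.
Proof. apply pair_eq; rewrite ?fst_Csum, ?snd_Csum; simpl.
 - rewrite (Rsum_ext n _ (fun i => fst z * r i)) by (intros; ring). rewrite Rsum_scal. ring.
 - rewrite (Rsum_ext n _ (fun i => snd z * r i)) by (intros; ring). rewrite Rsum_scal. ring. Qed.

Lemma K2 {X : TopSpace} (phi : X -> X) L rho n U v : is_transfer_operator phi L -> fibre_rep phi L rho ->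
  open_cover_homeo phi n U -> partition_of_unity_subordinate n U v ->
  is_quasi_basis phi L n (fun i x => RtoC (sqrt (v i x / rho x))).
Proof. intros HT [Hrc [Hrp Hfib]] [HU Hcov] [Hv Hsum].
 assert (Hu0 : forall i x, (i < n)%nat -> v i x = 0 -> sqrt (v i x / rho x) = 0).
 { intros i x Hi E. rewrite E. unfold Rdiv; rewrite Rmult_0_l. apply sqrt_0. }
 split.
 - intros i Hi. apply contC_RtoC. destruct (Hv i Hi) as [Hc [Hb _]]. apply contR_sqrt.
   apply contR_div; auto. intros x; specialize (Hrp x); lra.
   intros x. specialize (Hrp x). specialize (Hb x). apply Rmult_le_pos; [lra| left; apply Rinv_0_lt_compat; lra].
 - intros a Ha x. unfold alpha_of. destruct (Hfib (phi x)) as [l [Hnd [Hl [_ HL]]]].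
   assert (Hxl : In x l) by (apply Hl; auto).
   rewrite (Csum_ext n _ (fun i => Cmul (RtoC (v i x)) (a x))).
   + rewrite Csum_RtoC_mul, Hsum. Cring.
   + intros i Hi. destruct (Hv i Hi) as [Hc [Hb Hsupp]].
     assert (HinU : forall z, v i z <> 0 -> U i z) by (intros z Hz; apply Hsupp; apply closure_incl; auto).
     rewrite HL.
     2:{ apply contC_mul; auto. apply contC_conj, contC_RtoC. apply contR_sqrt. apply contR_div; auto.
         intros z; specialize (Hrp z); lra.
         intros z. specialize (Hrp z). specialize (Hb z). apply Rmult_le_pos; [lra| left; apply Rinv_0_lt_compat; lra]. }
     destruct (Req_dec (v i x) 0) as [E|E].
     * rewrite Hu0, E; auto. Cring.
     * rewrite (Csum_list_single l _ x Hnd Hxl).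
       -- assert (Hq : 0 <= v i x / rho x) by (specialize (Hrp x); specialize (Hb x); apply Rmult_le_pos; [lra| left; apply Rinv_0_lt_compat; lra]).
          pose proof (sqrt_sqrt _ Hq). pose proof (Hrp x).
          set (s := sqrt (v i x / rho x)) in *.
          assert (Hv' : v i x = s * s * rho x) by (rewrite H; field; lra).
          rewrite Hv'. apply pair_eq; Csimpl; ring.
       -- intros z Hz Hzx. assert (v i z = 0).
          { destruct (Req_dec (v i z) 0) as [?|Ez]; auto. exfalso. apply Hzx.
            destruct (HU i Hi) as [_ [Hinj _]]. apply Hinj; auto. apply Hl; auto. }
          rewrite Hu0; auto. Cring. Qed.

Lemma open_of_nbhd {X : TopSpace} (S : X -> Prop) : (forall y, S y -> exists N, is_open N /\ N y /\ forall z, N z -> S z) -> is_open S.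
Proof. intros H. apply (is_open_ext (fun y => exists N, (fun N => is_open N /\ forall z, N z -> S z) N /\ N y)).
 - intros y; split. intros [N [[? ?] ?]]; auto. intros Hy. destruct (H y Hy) as [N [? [? ?]]]. eauto.
 - apply open_union. tauto. Qed.

Lemma open_avoid {X : TopSpace} (l : list X) (x : X) : hausdorff X -> is_open (fun w => forall z, In z l -> z <> x -> w <> z).
Proof. intros Hh. apply open_finite_inter. intros z _ _. apply (point_closed z Hh). Qed.

Lemma fib_eval {X : TopSpace} (phi : X -> X) (L : (X -> Cplx) -> (X -> Cplx)) rho (b : X -> R) y l :
  (forall a, contC a -> L a y = Csum_list l (fun x => Cmul (RtoC (rho x)) (a x))) -> contR b ->
  fst (L (RC b) y) = Rsum_list l (fun z => rho z * b z).
Proof. intros HL Hb. rewrite HL by (apply contC_RtoC; auto). rewrite fst_Csum_list. apply Rsum_list_ext.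
 intros; unfold RC; simpl; ring. Qed.

Lemma FR_open {X : TopSpace} (phi : X -> X) L rho : compact_space X -> hausdorff X -> is_transfer_operator phi L -> fibre_rep phi L rho ->
  forall V, is_open V -> is_open (img phi V).
Proof. intros Hc Hh HT [Hrc [Hrp Hfib]] V0 HV0. apply open_of_nbhd. intros y0 [x0 [Vx0 <-]].
 destruct (Hfib (phi x0)) as [l [Hnd [Hl [_ HL]]]].
 set (V := fun w => V0 w /\ forall z, In z l -> z <> x0 -> w <> z).
 assert (HV : is_open V) by (apply open_inter; auto; apply open_avoid; auto).
 destruct (bump x0 V Hc Hh HV) as [b [Hbc [Hb01 [Hbx Hb0]]]]. { split; [auto| intros z _ Hz E; subst; auto]. }
 set (F := fun y => fst (L (RC b) y)).
 assert (HF : contR F) by (apply contC_fst, (L_cont phi L HT), contC_RtoC; auto).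
 assert (F (phi x0) = rho x0). { unfold F. rewrite (fib_eval phi L rho b (phi x0) l HL Hbc).
   rewrite (Rsum_list_single l _ x0 Hnd). rewrite Hbx; ring. apply Hl; auto.
   intros z Hz Hzx. rewrite Hb0. ring. intros [_ Hv]. apply (Hv z Hz Hzx); auto. }
 destruct (HF (phi x0) (rho x0 / 2)) as [N [HN [HNx HNy]]]. specialize (Hrp x0); lra.
 exists N; repeat split; auto. intros y' Hy'. specialize (HNy y' Hy').
 destruct (Hfib y') as [l' [Hnd' [Hl' [_ HL']]]].
 assert (Fy : F y' = Rsum_list l' (fun z => rho z * b z)) by (apply (fib_eval phi L rho b y' l' HL' Hbc)).
 destruct (classic (exists z, In z l' /\ b z <> 0)) as [[z [Hz Hbz]]|Hn].
 - exists z. split. destruct (classic (V z)) as [[? _]|?]; auto. exfalso; apply Hbz; auto. apply Hl'; auto.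
 - exfalso. rewrite Rsum_list_notin in Fy. rewrite H in HNy. specialize (Hrp x0).
   revert HNy; rewrite Fy; unfold Rabs; destruct (Rcase_abs _); intros; lra.
   intros z Hz. destruct (Req_dec (b z) 0) as [E|E]. rewrite E; ring. exfalso; apply Hn; eauto. Qed.

Lemma FR_locinj {X : TopSpace} (phi : X -> X) L rho : compact_space X -> hausdorff X -> top_continuous phi -> is_transfer_operator phi L -> fibre_rep phi L rho ->
  forall x, exists U, is_open U /\ U x /\ forall x1 x2, U x1 -> U x2 -> phi x1 = phi x2 -> x1 = x2.
Proof. intros Hc Hh Hpc HT [Hrc [Hrp Hfib]] x.
 destruct (Hfib (phi x)) as [l [Hnd [Hl [_ HL]]]].
 set (V := fun w => forall z, In z l -> z <> x -> w <> z).
 assert (HV : is_open V) by (apply open_avoid; auto).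
 destruct (bump x V Hc Hh HV) as [b [Hbc [Hb01 [Hbx Hb0]]]]. { intros z _ Hz E; subst; auto. }
 set (F := fun y => fst (L (RC b) y)). set (c := rho x).
 assert (Hcp : 0 < c) by (apply Hrp).
 assert (HF : contR F) by (apply contC_fst, (L_cont phi L HT), contC_RtoC; auto).
 assert (HFx : F (phi x) = c). { unfold F. rewrite (fib_eval phi L rho b (phi x) l HL Hbc).
   rewrite (Rsum_list_single l _ x Hnd). rewrite Hbx; unfold c; ring. apply Hl; auto.
   intros z Hz Hzx. rewrite Hb0. ring. intros Hv. apply (Hv z Hz Hzx); auto. }
 assert (Hrb : contR (fun z => rho z * b z)) by (apply contR_mult; auto).
 destruct (Hrb x (c / 3)) as [O1 [HO1 [HO1x HO1y]]]; [lra|].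
 destruct (HF (phi x) (c / 3)) as [N [HN [HNx HNy]]]; [lra|].
 exists (fun z => O1 z /\ N (phi z)). split; [apply open_inter; auto; apply Hpc; auto|]. split; [auto|].
 intros x1 x2 [H1 H1'] [H2 H2'] E. apply NNPP. intros Hne.
 destruct (Hfib (phi x1)) as [l' [Hnd' [Hl' [_ HL']]]].
 assert (Fy : F (phi x1) = Rsum_list l' (fun z => rho z * b z)) by (apply (fib_eval phi L rho b _ l' HL' Hbc)).
 assert (Hge := Rsum_list_ge_two l' (fun z => rho z * b z) x1 x2 Hnd').
 assert (Hnn : forall i, In i l' -> 0 <= rho i * b i) by (intros i _; specialize (Hrp i); specialize (Hb01 i); nra).
 specialize (Hge Hnn (proj2 (Hl' x1) eq_refl) (proj2 (Hl' x2) (eq_sym E)) Hne).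
 assert (A1 := HO1y x1 H1). assert (A2 := HO1y x2 H2). rewrite Hbx in A1, A2. specialize (HNy (phi x1) H1').
 rewrite HFx, Fy in HNy. apply Rabs_def2 in A1. apply Rabs_def2 in A2. apply Rabs_def2 in HNy. unfold c in *. lra. Qed.

Lemma K1 {X : TopSpace} (phi : X -> X) L rho : compact_space X -> hausdorff X -> top_continuous phi -> is_transfer_operator phi L -> fibre_rep phi L rho ->
  local_homeo phi.
Proof. intros Hc Hh Hpc HT HF. split; auto. intros x.
 destruct (FR_locinj phi L rho Hc Hh Hpc HT HF x) as [U [HU [Ux Hinj]]].
 exists U. split; [auto|split; [auto|split]].
 - apply (FR_open phi L rho Hc Hh HT HF); auto.
 - split; auto. intros V HV. exists (img phi (fun x => U x /\ V x)). split.
   + apply (FR_open phi L rho Hc Hh HT HF). apply open_inter; auto.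
   + intros y; split. intros H; split; auto. destruct H as [z [[? ?] ?]]. exists z; auto. tauto. Qed.


Lemma Csum_list_ext {T} (l : list T) f g : (forall i, In i l -> f i = g i) -> Csum_list l f = Csum_list l g.
Proof. induction l; simpl; intros; auto. rewrite IHl, H; auto. Qed.
Lemma Rsum_const n k : Rsum n (fun _ => k) = INR n * k.
Proof. induction n; simpl; [ring|]. rewrite IHn. destruct n; simpl; ring. Qed.
Lemma Rsum_list_const {T} (l : list T) k : Rsum_list l (fun _ => k) = INR (length l) * k.
Proof. induction l; simpl; [ring|]. rewrite IHl. destruct (length l); simpl; ring. Qed.

Lemma bumps_family {X : TopSpace} (l : list X) : compact_space X -> hausdorff X ->
  exists E : X -> X -> R, (forall x, In x l -> contR (E x) /\ (forall z, 0 <= E x z <= 1) /\ E x x = 1) /\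
    (forall x x' z, In x l -> In x' l -> E x z <> 0 -> E x' z <> 0 -> x = x') /\
    (forall x z, In x l -> In z l -> z <> x -> E x z = 0).
Proof. intros Hc Hh. destruct (disjoint_family l Hh) as [V [HV1 HV2]].
 assert (H : forall x, exists e : X -> R, In x l -> contR e /\ (forall z, 0 <= e z <= 1) /\ e x = 1 /\ forall z, ~ V x z -> e z = 0).
 { intros x. destruct (classic (In x l)) as [Hx|Hx].
   - destruct (HV1 x Hx) as [Ho Hxx]. destruct (bump x (V x) Hc Hh Ho Hxx) as [e ?]. exists e; auto.
   - exists (fun _ => 0); intros; contradiction. }
 destruct (choice_fun _ H) as [E HE].
 assert (HEV : forall x z, In x l -> E x z <> 0 -> V x z).
 { intros x z Hx Hz. apply NNPP. intros Hn. apply Hz. apply (HE x Hx); auto. }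
 exists E. split; [|split].
 - intros x Hx. destruct (HE x Hx) as [? [? [? ?]]]; auto.
 - intros x x' z Hx Hx' H1 H2. apply (HV2 x x' z); auto.
 - intros x z Hx Hz Hzx. destruct (Req_dec (E x z) 0) as [?|E']; auto. exfalso. apply Hzx.
   apply (HV2 z x z); auto. apply HV1; auto. Qed.

Lemma L_fst_Rsum_list {X : TopSpace} phi L (HT : is_transfer_operator phi L) {T} (l : list T) (E : T -> X -> R) y :
  (forall x, In x l -> contR (E x)) ->
  fst (L (RC (fun z => Rsum_list l (fun x => E x z))) y) = Rsum_list l (fun x => fst (L (RC (E x)) y)).
Proof. intros HE. rewrite (L_ext L _ (fun z => Csum_list l (fun x => RC (E x) z))).
 - rewrite (L_Csum_list phi L HT). rewrite fst_Csum_list; auto. intros; apply contC_RtoC; auto.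
 - intros z. unfold RC. apply pair_eq; simpl. rewrite fst_Csum_list; auto. rewrite snd_Csum_list; simpl. rewrite Rsum_list_0; auto. Qed.

Lemma contR_Rsum_list {X : TopSpace} {T} (l : list T) (f : T -> X -> R) : (forall i, In i l -> contR (f i)) -> contR (fun x => Rsum_list l (fun i => f i x)).
Proof. induction l; simpl; intros. apply contR_const. apply (contR_plus (f a) (fun x => Rsum_list l (fun i => f i x))); auto. Qed.

Lemma contR_abs {X : TopSpace} (f : X -> R) : contR f -> contR (fun x => Rabs (f x)).
Proof. intros. apply (contR_lip f Rabs); auto. intros; apply Rabs_triang_inv2. Qed.

Lemma qb_bound {X : TopSpace} (N : nat) (u : nat -> X -> Cplx) : compact_space X -> (forall i, (i < N)%nat -> contC (u i)) ->
  exists M, 0 <= M /\ forall i x, (i < N)%nat -> Rabs (fst (u i x)) <= M /\ Rabs (snd (u i x)) <= M.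
Proof. intros Hc Hu. set (S := fun x => Rsum N (fun i => Rabs (fst (u i x)) + Rabs (snd (u i x)))).
 assert (HS : contR S). { apply contR_Rsum. intros i Hi. apply contR_plus; apply contR_abs; [apply contC_fst| apply contC_snd]; auto. }
 destruct (cont_bounded S Hc HS) as [M HM]. exists (Rabs M). split; [apply Rabs_pos|].
 intros i x Hi. assert (Hle : Rabs (fst (u i x)) + Rabs (snd (u i x)) <= S x).
 { apply (Rsum_ge_elem N (fun i => Rabs (fst (u i x)) + Rabs (snd (u i x)))); auto. intros; pose proof (Rabs_pos (fst (u j x))); pose proof (Rabs_pos (snd (u j x))); lra. }
 specialize (HM x). pose proof (Rle_abs M). pose proof (Rabs_pos (fst (u i x))). pose proof (Rabs_pos (snd (u i x))).
 assert (S x <= Rabs (S x)) by apply Rle_abs. lra. Qed.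

Lemma fibre_bound {X : TopSpace} (phi : X -> X) L N u : compact_space X -> hausdorff X -> is_transfer_operator phi L ->
  is_quasi_basis phi L N u -> exists B : nat, forall y l, NoDup l -> (forall z, In z l -> phi z = y) -> (length l <= B)%nat.
Proof. intros Hc Hh HT [Hu HQ]. destruct (qb_bound N u Hc Hu) as [M [HM0 HM]].
 set (K := 2 * INR N * M * M). destruct (archimed K) as [Ha _].
 exists (Z.to_nat (up K)). intros y l Hnd Hl.
 destruct (bumps_family l Hc Hh) as [E [HE1 [HE2 HE3]]].
 set (c := fun x => fst (L (RC (E x)) y)).
 assert (Hc1 : forall x, In x l -> 1 <= K * c x).
 { intros x Hx. destruct (HE1 x Hx) as [Hec [He01 Hexx]].
   assert (Hq := HQ (RC (E x)) (contC_RtoC _ Hec) x). apply (f_equal fst) in Hq.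
   unfold RC at 1 in Hq. simpl in Hq. rewrite Hexx in Hq. rewrite fst_Csum in Hq. unfold alpha_of in Hq. rewrite (Hl x Hx) in Hq.
   apply Rle_trans with (INR N * (2 * M * M * c x)); [|unfold K; right; ring].
   rewrite Hq at 1. rewrite <- Rsum_const.
   apply Rsum_le. intros i Hi.
   assert (Hbc : contC (fun z => Cmul (Cconj (u i z)) (RC (E x) z))) by (apply contC_mul; [apply contC_conj; auto| apply contC_RtoC; auto]).
   rewrite (L_split phi L HT _ y Hbc).
   set (p := fst (L (RC (fun z => fst (Cmul (Cconj (u i z)) (RC (E x) z)))) y)).
   set (q := fst (L (RC (fun z => snd (Cmul (Cconj (u i z)) (RC (E x) z)))) y)). simpl.
   destruct (HM i x Hi) as [Hm1 Hm2].
   assert (B1 : Rabs p <= M * c x).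
   { unfold p. apply (L_bound phi L HT); auto. apply contC_fst; auto. intros z. unfold RC; simpl.
     destruct (HM i z Hi) as [Hz1 _]. specialize (He01 z). replace (fst (u i z) * E x z - - snd (u i z) * 0) with (fst (u i z) * E x z) by ring.
     rewrite Rabs_mult, (Rabs_pos_eq (E x z)) by lra. apply Rmult_le_compat_r; lra. }
   assert (B2 : Rabs q <= M * c x).
   { unfold q. apply (L_bound phi L HT); auto. apply contC_snd; auto. intros z. unfold RC; simpl.
     destruct (HM i z Hi) as [_ Hz2]. specialize (He01 z). match goal with |- Rabs ?t <= _ => replace t with (- snd (u i z) * E x z) by ring end.
     rewrite Rabs_mult, Rabs_Ropp, (Rabs_pos_eq (E x z)) by lra. apply Rmult_le_compat_r; lra. }
   assert (fst (u i x) * p <= M * (M * c x)).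
   { apply Rle_trans with (Rabs (fst (u i x) * p)); [apply Rle_abs|]. rewrite Rabs_mult.
     apply Rmult_le_compat; auto; apply Rabs_pos. }
   assert (- (snd (u i x) * q) <= M * (M * c x)).
   { apply Rle_trans with (Rabs (snd (u i x) * q)); [rewrite <- Rabs_Ropp; apply Rle_abs|]. rewrite Rabs_mult.
     apply Rmult_le_compat; auto; apply Rabs_pos. }
   lra. }
 assert (Hsum : Rsum_list l c <= 1).
 { unfold c. rewrite <- (L_fst_Rsum_list phi L HT l E y) by (intros; apply HE1; auto).
   assert (H1 : fst (L (RC (fun _ => 1)) y) = 1).
   { rewrite (L_ext L _ (fun _ => Defs.C1)) by (intros; reflexivity). rewrite (L_one phi L HT); reflexivity. }
   rewrite <- H1. apply (L_mono phi L HT). apply contR_Rsum_list; intros; apply HE1; auto. apply contR_const.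
   intros z. apply Rsum_list_le1; auto. intros i Hi; apply HE1; auto.
   intros x1 x2 H1' H2' Hz1 Hz2. apply (HE2 x1 x2 z); auto. }
 assert (HK0 : 0 <= K) by (unfold K; pose proof (pos_INR N); apply Rmult_le_pos; [apply Rmult_le_pos; [apply Rmult_le_pos|]|]; lra).
 assert (Hlen : INR (length l) <= K).
 { rewrite <- (Rmult_1_r (INR (length l))). rewrite <- Rsum_list_const.
   apply Rle_trans with (Rsum_list l (fun x => K * c x)). apply Rsum_list_le; auto.
   rewrite Rsum_list_scal. rewrite <- (Rmult_1_r K) at 2. apply Rmult_le_compat_l; auto. }
 assert (Hup : (0 <= up K)%Z) by (apply le_IZR; lra).
 assert (INR (Z.to_nat (up K)) = IZR (up K)) by (rewrite INR_IZR_INZ, Z2Nat.id; auto).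
 apply INR_le. lra. Qed.

Lemma fibre_list {X : TopSpace} (phi : X -> X) (B : nat) y :
  (forall l, NoDup l -> (forall z, In z l -> phi z = y) -> (length l <= B)%nat) ->
  exists l, NoDup l /\ forall x, In x l <-> phi x = y.
Proof. intros HB.
 assert (H : forall m l, NoDup l -> (forall z, In z l -> phi z = y) -> (B - length l <= m)%nat -> exists l', NoDup l' /\ forall x, In x l' <-> phi x = y).
 { induction m; intros l Hnd Hl Hm.
   - destruct (classic (forall x, phi x = y -> In x l)) as [Hall|Hn].
     + exists l; split; auto; intros x; split; auto.
     + apply not_all_ex_not in Hn. destruct Hn as [x Hx]. exfalso.
       assert (NoDup (x :: l)) by (constructor; tauto). assert (Hb := HB (x :: l) H).
       simpl in Hb. assert (Hb' : (S (length l) <= B)%nat) by (apply Hb; intros z [<-|?]; [tauto|auto]). lia.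
   - destruct (classic (forall x, phi x = y -> In x l)) as [Hall|Hn].
     + exists l; split; auto; intros x; split; auto.
     + apply not_all_ex_not in Hn. destruct Hn as [x Hx].
       apply (IHm (x :: l)). constructor; tauto. intros z [<-|?]; [tauto|auto]. simpl. lia. }
 apply (H B nil); simpl; auto. constructor. tauto. lia. Qed.

Lemma locality_R {X : TopSpace} (phi : X -> X) L : compact_space X -> hausdorff X -> top_continuous phi -> is_transfer_operator phi L ->
  forall (g : X -> R) y, contR g -> (forall x, phi x = y -> g x = 0) -> fst (L (RC g) y) = 0.
Proof. intros Hc Hh Hpc HT g y Hg Hg0.
 assert (Heps : forall eps, 0 < eps -> Rabs (fst (L (RC g) y)) <= eps).
 { intros eps He. set (K := fun x => eps <= Rabs (g x)).
   assert (HK : closed K).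
   { unfold closed. apply open_of_nbhd. intros x Hx. unfold K in Hx.
     destruct (Hg x (eps - Rabs (g x))) as [U [HU [Ux HUy]]]; [lra|].
     exists U; repeat split; auto. intros z Hz Hk. specialize (HUy z Hz). unfold K in Hk.
     pose proof (Rabs_triang_inv (g z) (g x)). lra. }
   assert (HiK : cpt (img phi K)) by (apply cpt_image; auto; apply cpt_closed; auto).
   assert (Hy : ~ img phi K y). { intros [x [Kx Ex]]. unfold K in Kx. rewrite Hg0 in Kx; auto. rewrite Rabs_R0 in Kx; lra. }
   destruct (sep_point_cpt (img phi K) y Hh HiK Hy) as [U [V [HU [HV [Uy [HKV Hd]]]]]].
   destruct (bump y U Hc Hh HU Uy) as [b [Hbc [Hb01 [Hby Hb0]]]].
   assert (Hbk : forall x, K x -> b (phi x) = 0).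
   { intros x Kx. apply Hb0. intros Ux. apply (Hd (phi x)); split; auto. apply HKV. exists x; auto. }
   assert (Hbp : contR (fun x => b (phi x))) by (apply contR_comp_phi; auto).
   assert (H1c : contR (fun x => b (phi x) * g x)) by (apply contR_mult; auto).
   assert (H2c : contR (fun x => (1 - b (phi x)) * g x)) by (apply contR_mult; auto; apply contR_minus; auto; apply contR_const).
   rewrite (L_ext L (RC g) (fun x => Cadd (RC (fun x => b (phi x) * g x) x) (RC (fun x => (1 - b (phi x)) * g x) x)))
     by (intros x; unfold RC; apply pair_eq; simpl; ring).
   rewrite (L_add phi L HT) by (apply contC_RtoC; auto). simpl.
   assert (E2 : fst (L (RC (fun x => (1 - b (phi x)) * g x)) y) = 0).
   { rewrite (L_ext L _ (fun x => Cmul (RC (fun z => 1 - b z) (phi x)) (RC g x))) by (intros x; unfold RC; apply pair_eq; simpl; ring).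
     rewrite (L_tr phi L HT). unfold RC at 1; simpl. rewrite Hby. ring.
     apply contC_RtoC, contR_minus; auto; apply contR_const. apply contC_RtoC; auto. }
   rewrite E2, Rplus_0_r.
   assert (E1 := L_bound phi L HT (fun x => b (phi x) * g x) (fun _ => 1) eps y H1c (contR_const 1)).
   assert (H1 : fst (L (RC (fun _ => 1)) y) = 1).
   { rewrite (L_ext L _ (fun _ => Defs.C1)) by (intros; reflexivity). rewrite (L_one phi L HT); reflexivity. }
   rewrite H1, Rmult_1_r in E1. apply E1. intros x.
   destruct (classic (K x)) as [Kx|Kx]. rewrite Hbk; auto. rewrite Rmult_0_l, Rabs_R0; lra.
   unfold K in Kx. rewrite Rabs_mult. specialize (Hb01 (phi x)). rewrite (Rabs_pos_eq (b (phi x))) by lra.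
   pose proof (Rabs_pos (g x)). nra. }
 destruct (Req_dec (fst (L (RC g) y)) 0) as [?|Hne]; auto. exfalso.
 specialize (Heps (Rabs (fst (L (RC g) y)) / 2)). pose proof (Rabs_pos_lt _ Hne). lra. Qed.

Lemma locality {X : TopSpace} (phi : X -> X) L : compact_space X -> hausdorff X -> top_continuous phi -> is_transfer_operator phi L ->
  forall (a : X -> Cplx) y, contC a -> (forall x, phi x = y -> a x = Defs.C0) -> L a y = Defs.C0.
Proof. intros Hc Hh Hpc HT a y Ha Ha0. rewrite (L_split phi L HT a y Ha).
 rewrite (locality_R phi L Hc Hh Hpc HT (fun x => fst (a x))), (locality_R phi L Hc Hh Hpc HT (fun x => snd (a x))); auto.
 - apply contC_snd; auto.
 - intros x Hx; rewrite Ha0; auto.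
 - apply contC_fst; auto.
 - intros x Hx; rewrite Ha0; auto. Qed.

Lemma formula {X : TopSpace} (phi : X -> X) L : compact_space X -> hausdorff X -> top_continuous phi -> is_transfer_operator phi L ->
  forall y l, NoDup l -> (forall x, In x l <-> phi x = y) ->
  exists (w : X -> R) (E : X -> X -> R),
    (forall x, In x l -> contR (E x) /\ E x x = 1 /\ forall z, In z l -> z <> x -> E x z = 0) /\
    (forall a, contC a -> L a y = Csum_list l (fun x => Cmul (RtoC (w x)) (a x))).
Proof. intros Hc Hh Hpc HT y l Hnd Hl. destruct (bumps_family l Hc Hh) as [E [HE1 [HE2 HE3]]].
 exists (fun x => fst (L (RC (E x)) y)), E. split.
 - intros x Hx. destruct (HE1 x Hx) as [? [? ?]]. split; [auto| split; [auto| intros; apply HE3; auto]].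
 - intros a Ha. set (s := fun z => Csum_list l (fun x => Cmul (a x) (RC (E x) z))).
   assert (Hs : contC s) by (apply contC_Csum_list; intros x Hx; apply contC_mul; [apply contC_const| apply contC_RtoC; apply HE1; auto]).
   assert (H0 : L (fun z => Cadd (a z) (Copp (s z))) y = Defs.C0).
   { apply (locality phi L Hc Hh Hpc HT). apply contC_add; auto. apply contC_opp; auto.
     intros z Hz. apply Hl in Hz. unfold s. rewrite (Csum_list_single l _ z Hnd Hz).
     - destruct (HE1 z Hz) as [_ [_ Hzz]]. change (RC (E z) z) with (RtoC (E z z)); rewrite Hzz. Cring.
     - intros x Hx Hxz. change (RC (E x) z) with (RtoC (E x z)). rewrite HE3; auto. Cring. }
   rewrite (L_sub phi L HT) in H0 by auto.
   assert (Las : L a y = L s y).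
   { assert (F1 := f_equal fst H0). assert (F2 := f_equal snd H0). simpl in F1, F2.
     unfold Defs.C0, RtoC in F1, F2; simpl in F1, F2. apply pair_eq; lra. }
   rewrite Las. unfold s. rewrite (L_Csum_list phi L HT).
   + apply Csum_list_ext. intros x Hx. rewrite (L_scal phi L HT) by (apply contC_RtoC; apply HE1; auto).
     apply pair_eq; simpl. rewrite (L_real phi L HT) by (apply HE1; auto). ring. rewrite (L_real phi L HT) by (apply HE1; auto). ring.
   + intros x Hx. apply contC_mul; [apply contC_const| apply contC_RtoC; apply HE1; auto]. Qed.

Lemma K3 {X : TopSpace} (phi : X -> X) L : compact_space X -> hausdorff X -> top_continuous phi -> is_transfer_operator phi L ->
  transfer_finite_type phi L -> exists rho, fibre_rep phi L rho.
Proof. intros Hc Hh Hpc HT [N [u HQB]].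
 destruct (fibre_bound phi L N u Hc Hh HT HQB) as [B HB].
 assert (Hfl : forall y, exists l, NoDup l /\ forall x, In x l <-> phi x = y) by (intros y; apply (fibre_list phi B y); intros; apply (HB y); auto).
 destruct HQB as [Hu HQ].
 set (S := fun z => Rsum N (fun i => fst (u i z) * fst (u i z) + snd (u i z) * snd (u i z))).
 assert (HSc : contR S) by (apply contR_Rsum; intros i Hi; apply contR_plus; apply contR_mult; first [apply contC_fst| apply contC_snd]; auto).
 assert (HS0 : forall z, 0 <= S z) by (intros z; apply Rsum_nonneg; intros; nra).
 assert (Key : forall y l w E, NoDup l -> (forall x, In x l <-> phi x = y) ->
    (forall x, In x l -> contR (E x) /\ E x x = 1 /\ forall z, In z l -> z <> x -> E x z = 0) ->
    (forall a, contC a -> L a y = Csum_list l (fun x => Cmul (RtoC (w x)) (a x))) ->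
    forall x, In x l -> w x * S x = 1).
 { intros y l w E Hnd Hl HE Hw x Hx. destruct (HE x Hx) as [HEc [HExx HE0]].
   assert (Hq := HQ (RC (E x)) (contC_RtoC _ HEc) x). apply (f_equal fst) in Hq.
   change (RC (E x) x) with (RtoC (E x x)) in Hq. rewrite HExx in Hq. simpl in Hq. rewrite fst_Csum in Hq.
   unfold alpha_of in Hq. rewrite (proj1 (Hl x) Hx) in Hq. rewrite Hq. unfold S. rewrite <- Rsum_scal.
   apply Rsum_ext. intros i Hi. rewrite Hw.
   2:{ apply contC_mul; [apply contC_conj; auto| apply contC_RtoC; auto]. }
   rewrite (Csum_list_single l _ x Hnd Hx).
   - change (RC (E x) x) with (RtoC (E x x)). rewrite HExx. simpl. ring.
   - intros z Hz Hzx. change (RC (E x) z) with (RtoC (E x z)). rewrite HE0; auto. Cring. }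
 assert (HSp : forall z, 0 < S z).
 { intros z. destruct (Hfl (phi z)) as [l [Hnd Hl]]. destruct (formula phi L Hc Hh Hpc HT (phi z) l Hnd Hl) as [w [E [HE Hw]]].
   assert (w z * S z = 1) by (apply (Key (phi z) l w E); auto; apply Hl; auto).
   destruct (HS0 z) as [?|E0]; auto. rewrite <- E0 in H. lra. }
 assert (Hrep : forall y, exists l, NoDup l /\ (forall x, In x l <-> phi x = y) /\ Rsum_list l (fun x => / S x) = 1 /\
   forall a, contC a -> L a y = Csum_list l (fun x => Cmul (RtoC (/ S x)) (a x))).
 { intros y. destruct (Hfl y) as [l [Hnd Hl]]. destruct (formula phi L Hc Hh Hpc HT y l Hnd Hl) as [w [E [HE Hw]]].
   assert (Hwx : forall x, In x l -> w x = / S x).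
   { intros x Hx. assert (w x * S x = 1) by (apply (Key y l w E); auto). specialize (HSp x).
     apply (Rmult_eq_reg_r (S x)); [|lra]. rewrite H, Rinv_l; lra. }
   exists l. split; [auto|split; [auto|split]].
   - assert (H1 := Hw (fun _ => Defs.C1) (contC_const _)). rewrite (L_one phi L HT) in H1.
     apply (f_equal fst) in H1. rewrite fst_Csum_list in H1. simpl in H1.
     rewrite H1. apply Rsum_list_ext. intros x Hx. rewrite Hwx; auto. ring.
   - intros a Ha. rewrite Hw; auto. apply Csum_list_ext. intros x Hx. rewrite Hwx; auto. }
 exists (fun x => / S x). split; [|split].
 - apply contR_inv; auto. intros z; specialize (HSp z); lra.
 - intros x. split. apply Rinv_0_lt_compat; auto.
   destruct (Hrep (phi x)) as [l [Hnd [Hl [Hs _]]]]. rewrite <- Hs.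
   apply (Rsum_list_ge_elem l (fun x => / S x)). intros; left; apply Rinv_0_lt_compat; auto. apply Hl; auto.
 - intros y. destruct (Hrep y) as [l ?]. exists l; tauto. Qed.

Definition Tmap {X : TopSpace} (phi : X -> X) (U : X -> Prop) (s : X -> X) (b : X -> Cplx) (y : X) : Cplx :=
  if excluded_middle_informative (img phi U y) then b (s y) else Defs.C0.

Definition sspec {X : TopSpace} (phi : X -> X) (U : X -> Prop) (s : X -> X) := forall y, img phi U y -> U (s y) /\ phi (s y) = y.

Lemma Tmap_ext {X : TopSpace} phi U s (f g : X -> Cplx) y : (forall x, f x = g x) -> Tmap phi U s f y = Tmap phi U s g y.
Proof. intros H. unfold Tmap. destruct (excluded_middle_informative _); auto. Qed.
Lemma Tmap_add {X : TopSpace} phi U s (f g : X -> Cplx) y : Tmap phi U s (fun x => Cadd (f x) (g x)) y = Cadd (Tmap phi U s f y) (Tmap phi U s g y).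
Proof. unfold Tmap. destruct (excluded_middle_informative _); auto. Cring. Qed.
Lemma Tmap_scal {X : TopSpace} phi U s c (f : X -> Cplx) y : Tmap phi U s (fun x => Cmul c (f x)) y = Cmul c (Tmap phi U s f y).
Proof. unfold Tmap. destruct (excluded_middle_informative _); auto. Cring. Qed.
Lemma Tmap_tr {X : TopSpace} phi U s (a f : X -> Cplx) y : sspec phi U s -> Tmap phi U s (fun x => Cmul (a (phi x)) (f x)) y = Cmul (a y) (Tmap phi U s f y).
Proof. intros Hs. unfold Tmap. destruct (excluded_middle_informative _) as [H|H]. destruct (Hs y H) as [_ ->]; auto. Cring. Qed.

Lemma Cmod_C0 : Cmod (Cadd Defs.C0 (Copp Defs.C0)) = 0.
Proof. unfold Cmod; Csimpl. replace ((0 + - 0) * (0 + - 0) + (0 + - 0) * (0 + - 0)) with 0 by ring. apply sqrt_0. Qed.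

Lemma Tcont {X : TopSpace} (phi : X -> X) (U : X -> Prop) (s : X -> X) (b : X -> Cplx) : compact_space X -> hausdorff X ->
  top_continuous phi -> is_open (img phi U) -> homeo_onto_image phi U -> sspec phi U s -> contC b ->
  (forall z, top_closure (fun z => b z <> Defs.C0) z -> U z) -> contC (Tmap phi U s b).
Proof. intros Hc Hh Hpc HiU [Hinj Hhom] Hs Hb Hsupp y eps He.
 destruct (classic (img phi U y)) as [Hy|Hy].
 - destruct (Hs y Hy) as [Usy Esy]. destruct (Hb (s y) eps He) as [V [HV [Vsy HVb]]].
   destruct (Hhom V HV) as [W [HW HWe]].
   exists (fun y' => W y' /\ img phi U y'). split; [apply open_inter; auto|]. split.
   + apply HWe. exists (s y); auto.
   + intros y' [Wy' Uy']. assert (H1 : img phi (fun x => U x /\ V x) y') by (apply (proj2 (HWe y')); split; auto).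
     destruct H1 as [z [[Uz Vz] Ez]]. destruct (Hs y' Uy') as [Usy' Esy'].
     assert (s y' = z) by (apply Hinj; auto; congruence). unfold Tmap.
     destruct (excluded_middle_informative (img phi U y')); [|contradiction].
     destruct (excluded_middle_informative (img phi U y)); [|contradiction]. subst z. auto.
 - set (K := top_closure (fun z => b z <> Defs.C0)).
   assert (HK : cpt (img phi K)) by (apply cpt_image; auto; apply cpt_closed; auto; apply closure_closed).
   assert (HyK : ~ img phi K y) by (intros [z [Kz Ez]]; apply Hy; exists z; split; auto).
   destruct (sep_point_cpt (img phi K) y Hh HK HyK) as [O [V [HO [HV [Oy [HKV Hd]]]]]].
   exists O. split; auto. split; auto. intros y' Oy'.
   assert (E : Tmap phi U s b y' = Defs.C0).
   { unfold Tmap. destruct (excluded_middle_informative (img phi U y')) as [H|H]; auto.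
     apply NNPP. intros Hn. apply (Hd y'). split; auto. apply HKV. exists (s y'). split.
     apply closure_incl; auto. apply Hs; auto. }
   assert (E' : Tmap phi U s b y = Defs.C0) by (unfold Tmap; destruct (excluded_middle_informative (img phi U y)); [contradiction|auto]).
   rewrite E, E', Cmod_C0. auto. Qed.

Lemma Csum_add n (f g : nat -> Cplx) : Csum n (fun i => Cadd (f i) (g i)) = Cadd (Csum n f) (Csum n g).
Proof. induction n; simpl. Cring. rewrite IHn. Cring. Qed.
Lemma Csum_scal n c (f : nat -> Cplx) : Csum n (fun i => Cmul c (f i)) = Cmul c (Csum n f).
Proof. induction n; simpl. Cring. rewrite IHn. Cring. Qed.
Lemma Csum_nonneg n (f : nat -> Cplx) : (forall i, (i < n)%nat -> Cnonneg (f i)) -> Cnonneg (Csum n f).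
Proof. unfold Cnonneg. induction n; simpl; intros H. Csimpl; lra. destruct IHn as [A B]; auto. destruct (H n) as [C D]; auto.
 simpl. lra. Qed.

Lemma K6 {X : TopSpace} (phi : X -> X) : compact_space X -> hausdorff X -> top_continuous phi -> (forall y, exists x, phi x = y) ->
  local_homeo phi -> alpha_finite_type phi.
Proof. intros Hc Hh Hpc Hphis HLH.
 destruct (lh_cover phi Hc HLH) as [n [U [[HU Hcov] HUi]]].
 destruct (pou_exists n U Hc Hh (fun i Hi => proj1 (HU i Hi)) Hcov) as [v [Hv Hsum]].
 assert (Hsx : forall p : nat * X, exists x, img phi (U (fst p)) (snd p) -> U (fst p) x /\ phi x = snd p).
 { intros [i y]; simpl. destruct (classic (img phi (U i) y)) as [[x [? ?]]|H]. exists x; auto. exists y; tauto. }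
 destruct (choice_fun _ Hsx) as [sf Hsf]. set (s := fun i y => sf (i, y)).
 assert (Hs : forall i, sspec phi (U i) (s i)) by (intros i y Hy; apply (Hsf (i, y)); auto).
 assert (HvU : forall i z, (i < n)%nat -> v i z <> 0 -> U i z) by (intros i z Hi Hz; apply (Hv i Hi); apply closure_incl; auto).
 assert (Hinj : forall i x1 x2, (i < n)%nat -> U i x1 -> U i x2 -> phi x1 = phi x2 -> x1 = x2) by (intros i x1 x2 Hi; apply (HU i Hi)).
 set (T := fun i b y => Tmap phi (U i) (s i) b y).
 assert (HTc : forall i a, (i < n)%nat -> contC a -> contC (T i (fun x => Cmul (RtoC (v i x)) (a x)))).
 { intros i a Hi Ha. apply Tcont; [exact Hc|exact Hh|exact Hpc|apply HUi; auto|apply (HU i Hi)|apply Hs| |].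
   apply contC_mul; auto. apply contC_RtoC, Hv; auto.
   intros z Hz. apply (Hv i Hi). apply (closure_mono (fun z => Cmul (RtoC (v i z)) (a z) <> Defs.C0)); auto.
   intros w Hw E. apply Hw. rewrite E. Cring. }
 set (Nn := fun y => Rsum n (fun i => fst (T i (fun x => Cmul (RtoC (v i x)) Defs.C1) y))).
 assert (HNc : contR Nn) by (apply contR_Rsum; intros i Hi; apply contC_fst, HTc; auto; apply contC_const).
 assert (HTv : forall i y, fst (T i (fun x => Cmul (RtoC (v i x)) Defs.C1) y) = (if excluded_middle_informative (img phi (U i) y) then v i (s i y) else 0)
                           /\ snd (T i (fun x => Cmul (RtoC (v i x)) Defs.C1) y) = 0).
 { intros i y. unfold T, Tmap. destruct (excluded_middle_informative _); Csimpl; split; ring. }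
 assert (HN1 : forall y, 1 <= Nn y).
 { intros y. destruct (Hphis y) as [x <-]. rewrite <- (Hsum x). unfold Nn. apply Rsum_le. intros i Hi.
   rewrite (proj1 (HTv i (phi x))). destruct (Hv i Hi) as [_ [H01 _]].
   destruct (excluded_middle_informative _) as [Hi'|Hi'].
   - destruct (Req_dec (v i x) 0) as [E|E]. rewrite E; apply H01.
     destruct (Hs i (phi x) Hi') as [U1 E1]. rewrite (Hinj i (s i (phi x)) x); auto. lra.
   - destruct (Req_dec (v i x) 0) as [E|E]. lra. exfalso; apply Hi'. exists x; split; auto. }
 set (L := fun (a : X -> Cplx) y => Cmul (RtoC (/ Nn y)) (Csum n (fun i => T i (fun x => Cmul (RtoC (v i x)) (a x)) y))).
 assert (HT : is_transfer_operator phi L).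
 { split; [|split; [|split; [|split; [|split]]]].
   - intros a Ha. apply contC_mul. apply contC_RtoC, contR_inv; auto. intros y; specialize (HN1 y); lra.
     apply contC_Csum. intros i Hi; apply HTc; auto.
   - intros a b Ha Hb y. unfold L.
     rewrite (Csum_ext n _ (fun i => Cadd (T i (fun x => Cmul (RtoC (v i x)) (a x)) y) (T i (fun x => Cmul (RtoC (v i x)) (b x)) y))).
     rewrite Csum_add. Cring.
     intros i Hi. unfold T. rewrite <- Tmap_add. apply Tmap_ext. intros; Cring.
   - intros c a Ha y. unfold L.
     rewrite (Csum_ext n _ (fun i => Cmul c (T i (fun x => Cmul (RtoC (v i x)) (a x)) y))).
     rewrite Csum_scal. Cring.
     intros i Hi. unfold T. rewrite <- Tmap_scal. apply Tmap_ext. intros; Cring.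
   - intros a Ha Hpos y. unfold L. 
     assert (Cnonneg (Csum n (fun i => T i (fun x => Cmul (RtoC (v i x)) (a x)) y))).
     { apply Csum_nonneg. intros i Hi. unfold T, Tmap. destruct (excluded_middle_informative _).
       - destruct (Hpos (s i y)) as [P1 P2]. destruct (Hv i Hi) as [_ [H01 _]]. specialize (H01 (s i y)).
         unfold Cnonneg; Csimpl. split. rewrite P1; ring. rewrite P1. nra.
       - unfold Cnonneg; Csimpl; lra. }
     destruct H as [P1 P2]. specialize (HN1 y). assert (0 < / Nn y) by (apply Rinv_0_lt_compat; lra).
     unfold Cnonneg; Csimpl. split. rewrite P1; ring. rewrite P1. nra.
   - intros y. unfold L. apply pair_eq; Csimpl; rewrite fst_Csum, snd_Csum.
     + fold (Nn y). rewrite Rsum_ext with (g := fun _ => 0). rewrite Rsum_0. specialize (HN1 y). field. lra.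
       intros i Hi. apply HTv.
     + rewrite Rsum_ext with (g := fun _ => 0). rewrite Rsum_0. ring. intros i Hi. apply HTv.
   - intros a b Ha Hb y. unfold L, alpha_of.
     rewrite (Csum_ext n _ (fun i => Cmul (a y) (T i (fun x => Cmul (RtoC (v i x)) (b x)) y))).
     rewrite Csum_scal. Cring.
     intros i Hi. unfold T. rewrite <- Tmap_tr by auto. apply Tmap_ext. intros; Cring. }
 exists L. split; auto.
 set (r := fun i x => sqrt (v i x * Nn (phi x))).
 assert (Hr0 : forall i z, v i z = 0 -> r i z = 0) by (intros i z E; unfold r; rewrite E, Rmult_0_l; apply sqrt_0).
 assert (Hrr : forall i z, (i < n)%nat -> r i z * r i z = v i z * Nn (phi z)).
 { intros i z Hi. unfold r. apply sqrt_sqrt. destruct (Hv i Hi) as [_ [H01 _]]. specialize (H01 z). specialize (HN1 (phi z)). nra. }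
 exists n, (fun i x => RtoC (r i x)). split.
 - intros i Hi. apply contC_RtoC. apply contR_sqrt. apply contR_mult. apply Hv; auto. apply contR_comp_phi; auto.
   intros z. destruct (Hv i Hi) as [_ [H01 _]]. specialize (H01 z). specialize (HN1 (phi z)). nra.
 - intros a Ha x. unfold alpha_of.
   assert (Claim : forall i j, (i < n)%nat -> (j < n)%nat ->
     Cmul (RtoC (r i x)) (T j (fun z => Cmul (RtoC (v j z)) (Cmul (Cconj (RtoC (r i z))) (a z))) (phi x)) = Cmul (RtoC (v j x * (r i x * r i x))) (a x)).
   { intros i j Hi Hj. unfold T, Tmap. destruct (excluded_middle_informative _) as [Him|Him].
     - destruct (Hs j (phi x) Him) as [Ux' Ex']. set (x' := s j (phi x)) in *.
       destruct (classic (U j x)) as [Ujx|Ujx].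
       + assert (x' = x) by (apply (Hinj j); auto). rewrite H. Cring.
       + assert (Evj : v j x = 0) by (apply NNPP; intro E; apply Ujx; apply HvU; auto). rewrite Evj.
         destruct (Req_dec (v i x) 0) as [E|E]. rewrite (Hr0 i x E). Cring.
         assert (Uix : U i x) by (apply HvU; auto).
         assert (Evi : v i x' = 0). { apply NNPP; intro E'. apply Ujx. assert (x' = x) by (apply (Hinj i); auto; apply HvU; auto). congruence. }
         rewrite (Hr0 i x' Evi). Cring.
     - assert (Evj : v j x = 0). { apply NNPP; intro E. apply Him. exists x; split; auto. }
       rewrite Evj. Cring. }
   rewrite (Csum_ext n _ (fun i => Cmul (RtoC (v i x)) (a x))).
   + rewrite Csum_RtoC_mul, Hsum. Cring.
   + intros i Hi. unfold L.
     set (F := fun j => T j (fun z => Cmul (RtoC (v j z)) (Cmul (Cconj (RtoC (r i z))) (a z))) (phi x)).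
     transitivity (Cmul (RtoC (/ Nn (phi x))) (Csum n (fun j => Cmul (RtoC (r i x)) (F j)))).
     * rewrite Csum_scal. Cring.
     * rewrite (Csum_ext n _ (fun j => Cmul (RtoC (v j x * (r i x * r i x))) (a x))) by (intros; apply Claim; auto).
       rewrite Csum_RtoC_mul. rewrite (Rsum_ext n _ (fun j => (r i x * r i x) * v j x)) by (intros; ring).
       rewrite Rsum_scal, Hsum, Hrr by auto. specialize (HN1 (phi x)).
       apply pair_eq; Csimpl; field; lra. Qed.
Theorem mainTheorem14 (X : TopSpace) (HXc : compact_space X) (HXh : hausdorff X)
    (phi : X -> X) (Hphic : top_continuous phi) (Hphis : forall y, exists x, phi x = y) :
  (alpha_finite_type phi <-> local_homeo phi) /\
  forall L : (X -> Cplx) -> (X -> Cplx), is_transfer_operator phi L ->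
    (transfer_finite_type phi L <-> exists rho, fibre_rep phi L rho) /\
    (forall rho, fibre_rep phi L rho ->
       local_homeo phi /\
       forall (n : nat) (U : nat -> X -> Prop) (v : nat -> X -> R),
         open_cover_homeo phi n U -> partition_of_unity_subordinate n U v ->
         is_quasi_basis phi L n (fun i x => RtoC (sqrt (v i x / rho x)))).
Proof.
 split.
 - split.
   + intros [L [HT HTF]]. destruct (K3 phi L HXc HXh Hphic HT HTF) as [rho Hr].
     exact (K1 phi L rho HXc HXh Hphic HT Hr).
   + intros HLH. exact (K6 phi HXc HXh Hphic Hphis HLH).
 - intros L HT. split.
   + split.
     * intros HTF. apply (K3 phi L HXc HXh Hphic HT HTF).
     * intros [rho Hr]. pose proof (K1 phi L rho HXc HXh Hphic HT Hr) as HLH.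
       destruct (lh_cover phi HXc HLH) as [n [U [[HU Hcov] _]]].
       destruct (pou_exists n U HXc HXh (fun i Hi => proj1 (HU i Hi)) Hcov) as [v Hv].
       exists n, (fun i x => RtoC (sqrt (v i x / rho x))). apply (K2 phi L rho n U v); auto. split; auto.
   + intros rho Hr. split.
     * exact (K1 phi L rho HXc HXh Hphic HT Hr).
     * intros n U v Hoc Hpou. apply (K2 phi L rho n U v); auto.
Qed.
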